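(* In the Nakagami model with parameters $L_c>0$, $L_s>0$, the distortion exponent achievable by separate source and channel coding with rates scaling as $R_c=\frac{r_c}{2}\log_2\rho$, $R_s=\frac{r_s}{2}\log_2\rho$, $$\Delta_s(L_s,L_c):=\sup_{r_c>0,\ r_s\ge0}\ \lim_{\rho\to\infty}-\frac{\log ED_s\big(\tfrac{r_s}{2}\log_2\rho,\tfrac{r_c}{2}\log_2\rho\big)}{\log\rho},$$ equals $$\Delta_s(L_s,L_c)=\begin{cases}1-\dfrac{(1-L_s)^2}{L_c+1-L_s}&\text{if }L_s\le1,\\[2mm] \dfrac{L_s(2L_c+1)-L_c-1}{L_s(L_c+1)-1}&\text{if }L_s>1.\end{cases}$$
   Context: Nakagami model: for SNR $\rho>0$, the channel gain is $H=\rho H_0$ and the side-information gain is $\Gamma=\rho\Gamma_0$, where $H_0,\Gamma_0$ are independent, $H_0$ is Gamma distributed with shape $L_c$ and scale $1/L_c$, and $\Gamma_0$ is Gamma distributed with shape $L_s$ and scale $1/L_s$ (Gamma$(L,\theta)$ density $\frac{1}{\theta^L\Gamma(L)}x^{L-1}e^{-x/\theta}$, $x\ge0$). Logarithms base 2 unless ratios of logs. Define $D_d(R,\gamma)=(\gamma+2^{2R})^{-1}$. For $R_s\ge0,R_c>0$, the SSCC outage set is $\mathcal O_s=\{(h,\gamma): R_c\ge\tfrac12\log_2(1+h)\}\cup\{(h,\gamma): R_c\le \tfrac12\log_2(1+\tfrac{2^{2(R_s+R_c)}-1}{1+\gamma})\}$ and $ED_s(R_s,R_c)=\mathrm E[D_d(R_s+R_c,\Gamma)\mathbf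 1\{(H,\Gamma)\notin\mathcal O_s\}]+\mathrm E[D_d(0,\Gamma)\mathbf 1\{(H,\Gamma)\in\mathcal O_s\}]$ (a function of $\rho$ through $H,\Gamma$). *)

(* Defs.v *)
From Stdlib Require Import Reals Lra ClassicalEpsilon.
Open Scope R_scope.

Definition log2 (x : R) : R := ln x / ln 2.

Definition IsInt0inf (f : R -> R) (I : R) : Prop :=
  (forall a b : R, 0 < a -> a <= b -> exists pr : Riemann_integrable f a b, True) /\
  (forall eps : R, 0 < eps -> exists delta M : R, 0 < delta /\
     forall (a b : R) (pr : Riemann_integrable f a b),
       0 < a -> a < delta -> M < b -> Rabs (RiemannInt pr - I) < eps).

(* The value of the improper integral (chosen by description; unique when it exists). *)
Definition Int0inf (f : R -> R) : R :=
  epsilon (inhabits 0) (fun I => IsInt0inf f I).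

Definition GammaFn (L : R) : R :=
  Int0inf (fun x => Rpower x (L - 1) * exp (- x)).

Definition gamma_pdf (L theta : R) (x : R) : R :=
  / (Rpower theta L * GammaFn L) * Rpower x (L - 1) * exp (- x / theta).

Definition Dd (Rr g : R) : R := / (g + Rpower 2 (2 * Rr)).

Definition in_Os (Rs Rc h g : R) : bool :=
  if Rle_dec (/2 * log2 (1 + h)) Rc then true
  else if Rle_dec Rc (/2 * log2 (1 + (Rpower 2 (2 * (Rs + Rc)) - 1) / (1 + g)))
       then true else false.

Definition dist_s (Rs Rc h g : R) : R :=
  if in_Os Rs Rc h g then Dd 0 g else Dd (Rs + Rc) g.

(* ED_s(Rs,Rc) at SNR rho in the Nakagami model:
   E[ dist_s(rho H0, rho Gamma0) ], H0 ~ Gamma(Lc, 1/Lc), Gamma0 ~ Gamma(Ls, 1/Ls)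
   independent; written as an iterated integral over (0,oo)^2 (the integrand is
   nonnegative and bounded, so by Tonelli this is the expectation). *)
Definition EDs (Ls Lc rho Rs Rc : R) : R :=
  Int0inf (fun g0 =>
    Int0inf (fun h0 => dist_s Rs Rc (rho * h0) (rho * g0) * gamma_pdf Lc (/ Lc) h0)
    * gamma_pdf Ls (/ Ls) g0).

Definition lim_infty (f : R -> R) (l : R) : Prop :=
  forall eps : R, 0 < eps -> exists M : R, forall x : R, M < x -> Rabs (f x - l) < eps.

Definition exp_ratio (Ls Lc rs rc : R) (rho : R) : R :=
  - ln (EDs Ls Lc rho (rs / 2 * log2 rho) (rc / 2 * log2 rho)) / ln rho.

Definition Delta_formula (Ls Lc : R) : R :=
  if Rle_dec Ls 1 then 1 - (1 - Ls) ^ 2 / (Lc + 1 - Ls)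
  else (Ls * (2 * Lc + 1) - Lc - 1) / (Ls * (Lc + 1) - 1).

(* Main.v *)
Require Import Defs.
From Stdlib Require Import Reals.
Open Scope R_scope.
From Stdlib Require Import Lra Psatz ClassicalEpsilon Classical.
From Coquelicot Require Import Coquelicot.
Open Scope R_scope.

Definition loc_int (f : R -> R) := forall a b, 0 < a -> a <= b -> ex_RInt f a b.
Definition nonnegf (f : R -> R) := forall x, 0 < x -> 0 <= f x.
Definition bnd (f : R -> R) (B : R) := forall a b, 0 < a -> a <= b -> RInt f a b <= B.
Definition Good f := loc_int f /\ nonnegf f /\ exists B, bnd f B.

Lemma RInt_scal' (f : R -> R) a b (c : R) : ex_RInt f a b -> RInt (fun x => c * f x) a b = c * RInt f a b.
Proof. intros; apply (RInt_scal f a b c); auto. Qed.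
Lemma RInt_plus' (f g : R -> R) a b : ex_RInt f a b -> ex_RInt g a b -> RInt (fun x => f x + g x) a b = RInt f a b + RInt g a b.
Proof. intros; apply (RInt_plus f g a b); auto. Qed.
Lemma ex_RInt_scal' (f : R -> R) a b (c : R) : ex_RInt f a b -> ex_RInt (fun x => c * f x) a b.
Proof. intros; apply (ex_RInt_scal f a b c); auto. Qed.
Lemma ex_RInt_plus' (f g : R -> R) a b : ex_RInt f a b -> ex_RInt g a b -> ex_RInt (fun x => f x + g x) a b.
Proof. intros; apply (ex_RInt_plus f g a b); auto. Qed.

Lemma IsInt_unique f I J : IsInt0inf f I -> IsInt0inf f J -> I = J.
Proof.
  intros [H1 H2] [_ H3].
  destruct (Req_dec I J) as [E|NE]; auto. exfalso.
  set (eps := Rabs (I - J) / 2).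
  assert (Hep : 0 < eps). { unfold eps. assert (0 < Rabs (I-J)) by (apply Rabs_pos_lt; lra). lra. }
  destruct (H2 eps Hep) as (d1 & M1 & Hd1 & K1).
  destruct (H3 eps Hep) as (d2 & M2 & Hd2 & K2).
  set (a := Rmin d1 d2 / 2). set (b := Rmax (Rmax M1 M2) a + 1).
  assert (Hm : 0 < Rmin d1 d2) by (apply Rmin_glb_lt; auto).
  assert (Ha : 0 < a). { unfold a. lra. }
  assert (Hab : a <= b). { unfold b. pose proof (Rmax_r (Rmax M1 M2) a). lra. }
  destruct (H1 a b Ha Hab) as [pr _].
  assert (X1 : a < d1). { unfold a. pose proof (Rmin_l d1 d2). lra. }
  assert (X2 : a < d2). { unfold a. pose proof (Rmin_r d1 d2). lra. }
  assert (X3 : M1 < b). { unfold b. pose proof (Rmax_l (Rmax M1 M2) a). pose proof (Rmax_l M1 M2). lra. }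
  assert (X4 : M2 < b). { unfold b. pose proof (Rmax_l (Rmax M1 M2) a). pose proof (Rmax_r M1 M2). lra. }
  specialize (K1 a b pr Ha X1 X3). specialize (K2 a b pr Ha X2 X4).
  assert (X5 : Rabs (I - J) < 2 * eps).
  { replace (I - J) with (-(RiemannInt pr - I) + (RiemannInt pr - J)) by ring.
    eapply Rle_lt_trans. apply Rabs_triang. rewrite Rabs_Ropp. lra. }
  unfold eps in X5. lra.
Qed.

Lemma Int0inf_eq f I : IsInt0inf f I -> Int0inf f = I.
Proof.
  intros H. unfold Int0inf.
  apply (IsInt_unique f). 2: exact H.
  apply (epsilon_spec (inhabits 0) (fun I => IsInt0inf f I)). exists I; exact H.
Qed.

Lemma RInt_mono_int f a b a0 b0 : loc_int f -> nonnegf f ->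
  0 < a -> a <= a0 -> a0 <= b0 -> b0 <= b -> RInt f a0 b0 <= RInt f a b.
Proof.
  intros Hl Hn Ha H1 H2 H3.
  assert (E1 : RInt f a a0 + RInt f a0 b = RInt f a b).
  { apply (RInt_Chasles f a a0 b); apply Hl; lra. }
  assert (E2 : RInt f a0 b0 + RInt f b0 b = RInt f a0 b).
  { apply (RInt_Chasles f a0 b0 b); apply Hl; lra. }
  assert (0 <= RInt f a a0). { apply RInt_ge_0; [lra | apply Hl; lra | intros; apply Hn; lra]. }
  assert (0 <= RInt f b0 b). { apply RInt_ge_0; [lra | apply Hl; lra | intros; apply Hn; lra]. }
  lra.
Qed.

Lemma RInt_nonneg f a b : loc_int f -> nonnegf f -> 0 < a -> a <= b -> 0 <= RInt f a b.
Proof. intros Hl Hn Ha Hb. apply RInt_ge_0; [lra | apply Hl; lra | intros; apply Hn; lra]. Qed.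

Definition IntSet (f : R -> R) (y : R) := exists a b, 0 < a /\ a <= b /\ y = RInt f a b.

Lemma Good_IsInt f : Good f -> exists S, IsInt0inf f S /\ is_lub (IntSet f) S.
Proof.
  intros (Hl & Hn & B & HB).
  assert (Hbd : bound (IntSet f)). { exists B. intros y (a & b & Ha & Hab & ->). auto. }
  assert (Hne : exists y, IntSet f y). { exists (RInt f 1 1), 1, 1. split; lra. }
  destruct (completeness _ Hbd Hne) as [S HS].
  exists S. split; auto. split.
  - intros a b Ha Hab. exists (ex_RInt_Reals_0 _ _ _ (Hl a b Ha Hab)). auto.
  - intros eps Heps.
    assert (exists y, IntSet f y /\ S - eps < y).
    { apply NNPP. intros Hno. destruct HS as [_ HS2].
      assert (S <= S - eps). { apply HS2. intros y Hy. apply Rnot_lt_le. intro. apply Hno. exists y; auto. }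
      lra. }
    destruct H as (y & (a0 & b0 & Ha0 & Hab0 & ->) & Hy).
    exists a0, b0. split; auto. intros a b pr Ha Hlt Hgt.
    rewrite <- RInt_Reals.
    assert (RInt f a0 b0 <= RInt f a b) by (apply RInt_mono_int; auto; lra).
    assert (RInt f a b <= S). { destruct HS as [HS1 _]. apply HS1. exists a, b. repeat split; auto; lra. }
    rewrite Rabs_left1; lra.
Qed.

Lemma Int_le_bnd f B : Good f -> bnd f B -> Int0inf f <= B.
Proof.
  intros HG HB. destruct (Good_IsInt f HG) as (S & HS & Hl).
  rewrite (Int0inf_eq _ _ HS). destruct Hl as [_ Hl]. apply Hl.
  intros y (a & b & Ha & Hab & ->). auto.
Qed.

Lemma Int_ge_RInt f a b : Good f -> 0 < a -> a <= b -> RInt f a b <= Int0inf f.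
Proof.
  intros HG Ha Hab. destruct (Good_IsInt f HG) as (S & HS & Hl).
  rewrite (Int0inf_eq _ _ HS). destruct Hl as [Hl _]. apply Hl. exists a, b; auto.
Qed.

Lemma Int_approx f eps : Good f -> 0 < eps -> exists a b, 0 < a /\ a <= b /\ Int0inf f - eps < RInt f a b.
Proof.
  intros HG Heps. destruct (Good_IsInt f HG) as (S & HS & HL).
  rewrite (Int0inf_eq _ _ HS).
  apply NNPP. intros Hno. destruct HL as [_ HL2].
  assert (S <= S - eps). { apply HL2. intros y (a & b & Ha & Hab & ->). apply Rnot_lt_le. intro. apply Hno. exists a, b; auto. }
  lra.
Qed.

Lemma Int_nonneg f : Good f -> 0 <= Int0inf f.
Proof.
  intros HG. eapply Rle_trans. 2: apply (Int_ge_RInt f 1 1); auto; lra.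
  rewrite RInt_point. unfold zero; simpl. lra.
Qed.

Lemma Int_mono f g : Good f -> Good g -> (forall x, 0 < x -> f x <= g x) -> Int0inf f <= Int0inf g.
Proof.
  intros Hf Hg Hle. apply Int_le_bnd; auto. intros a b Ha Hab.
  eapply Rle_trans. 2: apply (Int_ge_RInt g a b); auto.
  apply RInt_le; auto. apply Hf; auto. apply Hg; auto. intros; apply Hle; lra.
Qed.

Lemma Good_ext f g : Good f -> (forall x, 0 < x -> f x = g x) -> Good g.
Proof.
  intros (Hl & Hn & B & HB) E. split; [|split].
  - intros a b Ha Hab. apply (ex_RInt_ext f). intros x Hx. rewrite Rmin_left in Hx by lra. apply E; lra. auto.
  - intros x Hx. rewrite <- E; auto.
  - exists B. intros a b Ha Hab. rewrite <- (RInt_ext f). auto. intros x Hx. rewrite Rmin_left in Hx by lra. apply E; lra.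
Qed.

Lemma Int_ext f g : Good f -> (forall x, 0 < x -> f x = g x) -> Int0inf f = Int0inf g.
Proof.
  intros Hf E. assert (Hg := Good_ext f g Hf E).
  apply Rle_antisym; apply Int_mono; auto; intros; rewrite E; auto; lra.
Qed.

Lemma Good_scal c f : 0 <= c -> Good f -> Good (fun x => c * f x).
Proof.
  intros Hc (Hl & Hn & B & HB). split; [|split].
  - intros a b Ha Hab. apply ex_RInt_scal'. auto.
  - intros x Hx. apply Rmult_le_pos; auto.
  - exists (c * B). intros a b Ha Hab. rewrite RInt_scal' by auto.
    apply Rmult_le_compat_l; auto.
Qed.

Lemma Int_scal c f : 0 <= c -> Good f -> Int0inf (fun x => c * f x) = c * Int0inf f.
Proof.
  intros Hc Hf. assert (Hg := Good_scal c f Hc Hf).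
  destruct (Req_dec c 0) as [->|Hc0].
  - rewrite Rmult_0_l. rewrite (Int_ext _ (fun _ => 0)); auto. 2: intros; ring.
    apply Rle_antisym. apply Int_le_bnd. apply (Good_ext _ _ Hg). intros; ring.
    intros a b _ _. rewrite RInt_const. unfold scal; simpl; unfold mult; simpl. lra.
    apply Int_nonneg. apply (Good_ext _ _ Hg). intros; ring.
  - apply Rle_antisym.
    + apply Int_le_bnd; auto. intros a b Ha Hab. rewrite RInt_scal' by (apply Hf; auto).
      apply Rmult_le_compat_l; auto. apply Int_ge_RInt; auto.
    + assert (Int0inf f <= Int0inf (fun x => c * f x) / c).
      { apply Int_le_bnd; auto. intros a b Ha Hab.
        apply (Rmult_le_reg_l c). lra. replace (c * (Int0inf (fun x => c * f x) / c)) with (Int0inf (fun x => c * f x)) by (field; lra).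
        rewrite <- RInt_scal' by (apply Hf; auto).
        apply (Int_ge_RInt (fun x => c * f x) a b); auto. }
      apply (Rmult_le_compat_l c) in H; [|lra].
      replace (c * (Int0inf (fun x => c * f x) / c)) with (Int0inf (fun x => c * f x)) in H by (field; lra). auto.
Qed.

Lemma Good_plus f g : Good f -> Good g -> Good (fun x => f x + g x).
Proof.
  intros (Hl & Hn & B & HB) (Hl' & Hn' & B' & HB'). split; [|split].
  - intros a b Ha Hab. apply ex_RInt_plus'; auto.
  - intros x Hx. specialize (Hn x Hx); specialize (Hn' x Hx). lra.
  - exists (B + B'). intros a b Ha Hab.
    rewrite RInt_plus' by auto. specialize (HB a b Ha Hab); specialize (HB' a b Ha Hab). lra.
Qed.

Lemma Int_plus f g : Good f -> Good g -> Int0inf (fun x => f x + g x) = Int0inf f + Int0inf g.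
Proof.
  intros Hf Hg. assert (Hfg := Good_plus f g Hf Hg).
  assert (RI : forall a b, 0 < a -> a <= b -> RInt (fun x => f x + g x) a b = RInt f a b + RInt g a b).
  { intros a b Ha Hab. apply RInt_plus'. apply Hf; auto. apply Hg; auto. }
  apply Rle_antisym.
  - apply Int_le_bnd; auto. intros a b Ha Hab. rewrite RI by auto.
    pose proof (Int_ge_RInt f a b Hf Ha Hab). pose proof (Int_ge_RInt g a b Hg Ha Hab). lra.
  - apply Rnot_lt_le. intro Hlt.
    set (eps := (Int0inf f + Int0inf g - Int0inf (fun x => f x + g x)) / 2).
    assert (Hep : 0 < eps) by (unfold eps; lra).
    destruct (Int_approx f eps Hf Hep) as (a1 & b1 & Ha1 & Hab1 & K1).
    destruct (Int_approx g eps Hg Hep) as (a2 & b2 & Ha2 & Hab2 & K2).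
    set (a := Rmin a1 a2). set (b := Rmax b1 b2).
    assert (Ha : 0 < a) by (unfold a; apply Rmin_glb_lt; auto).
    assert (a <= a1) by apply Rmin_l. assert (a <= a2) by apply Rmin_r.
    assert (b1 <= b) by apply Rmax_l. assert (b2 <= b) by apply Rmax_r.
    assert (RInt f a1 b1 <= RInt f a b) by (apply RInt_mono_int; try apply Hf; lra).
    assert (RInt g a2 b2 <= RInt g a b) by (apply RInt_mono_int; try apply Hg; lra).
    pose proof (Int_ge_RInt _ a b Hfg Ha ltac:(lra)). rewrite RI in H5 by lra.
    unfold eps in *. lra.
Qed.

Lemma Rpower_inv_y y c : 0 < y -> Rpower y (c - 1) = Rpower y c / y.
Proof.
  intros Hy. unfold Rpower. replace ((c - 1) * ln y) with (c * ln y + - ln y) by ring.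
  rewrite exp_plus, exp_Ropp, exp_ln by auto. reflexivity.
Qed.

Lemma cont_der (f : R -> R) x : ex_derive f x -> continuous f x.
Proof. intros H. exact (@ex_derive_continuous R_AbsRing R_NormedModule f x H). Qed.

Lemma cont_Rpower c y : 0 < y -> continuous (fun y => Rpower y c) y.
Proof.
  intros Hy. apply cont_der. unfold Rpower. auto_derive. auto.
Qed.

Lemma is_RInt_pow L a b : 0 < a -> a <= b -> L <> 0 ->
  is_RInt (fun y => Rpower y (L - 1)) a b ((Rpower b L - Rpower a L) / L).
Proof.
  intros Ha Hab HL.
  replace ((Rpower b L - Rpower a L) / L) with (minus (Rpower b L / L) (Rpower a L / L)).
  2:{ unfold minus, plus, opp; simpl. field. auto. }
  apply (is_RInt_derive (fun y => Rpower y L / L)).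
  - intros x Hx. rewrite Rmin_left, Rmax_right in Hx by lra.
    assert (Hx0 : 0 < x) by lra.
    rewrite Rpower_inv_y by lra. unfold Rpower. auto_derive. lra. field. split; lra.
  - intros x Hx. rewrite Rmin_left, Rmax_right in Hx by lra. apply cont_Rpower. lra.
Qed.

Lemma RInt_pow L a b : 0 < a -> a <= b -> L <> 0 ->
  RInt (fun y => Rpower y (L - 1)) a b = (Rpower b L - Rpower a L) / L.
Proof. intros. apply is_RInt_unique. apply is_RInt_pow; auto. Qed.

Lemma ex_RInt_cont_pos (f : R -> R) a b : 0 < a -> a <= b -> (forall y, 0 < y -> continuous f y) -> ex_RInt f a b.
Proof. intros. apply (@ex_RInt_continuous R_CompleteNormedModule). intros z Hz. rewrite Rmin_left in Hz by lra. apply H1. lra. Qed.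

Lemma RInt_inv a b : 0 < a -> a <= b -> RInt (fun y => / y) a b = ln b - ln a.
Proof.
  intros Ha Hab. apply is_RInt_unique.
  replace (ln b - ln a) with (minus (ln b) (ln a)) by (unfold minus, plus, opp; simpl; ring).
  apply (is_RInt_derive ln).
  - intros x Hx. rewrite Rmin_left, Rmax_right in Hx by lra. apply is_derive_ln. lra.
  - intros x Hx. rewrite Rmin_left, Rmax_right in Hx by lra. apply cont_der. auto_derive. lra.
Qed.

Lemma RInt_inv2 a b : 0 < a -> a <= b -> RInt (fun y => / (y * y)) a b = / a - / b.
Proof.
  intros Ha Hab. apply is_RInt_unique.
  replace (/ a - / b) with (minus (- / b) (- / a)) by (unfold minus, plus, opp; simpl; ring).
  apply (is_RInt_derive (fun y => - / y)).
  - intros x Hx. rewrite Rmin_left, Rmax_right in Hx by lra. auto_derive. lra. field. lra.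
  - intros x Hx. rewrite Rmin_left, Rmax_right in Hx by lra. apply cont_der. auto_derive. nra.
Qed.

Lemma ex_RInt_inv a b : 0 < a -> a <= b -> ex_RInt (fun y => / y) a b.
Proof. intros. apply ex_RInt_cont_pos; auto. intros. apply cont_der. auto_derive. lra. Qed.
Lemma ex_RInt_inv2 a b : 0 < a -> a <= b -> ex_RInt (fun y => / (y * y)) a b.
Proof. intros. apply ex_RInt_cont_pos; auto. intros. apply cont_der. auto_derive. nra. Qed.
Lemma ex_RInt_pow c a b : 0 < a -> a <= b -> ex_RInt (fun y => Rpower y c) a b.
Proof. intros. apply ex_RInt_cont_pos; auto. intros. apply cont_Rpower; auto. Qed.

Lemma Int_box f x y m : Good f -> 0 < x -> x <= y -> (forall z, x < z < y -> m <= f z) -> m * (y - x) <= Int0inf f.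
Proof.
  intros HG Hx Hxy Hm. eapply Rle_trans. 2: apply (Int_ge_RInt f x y); auto.
  replace (m * (y - x)) with (RInt (fun _ => m) x y).
  2:{ rewrite RInt_const. unfold scal; simpl; unfold mult; simpl. ring. }
  apply RInt_le; auto. apply ex_RInt_const. apply HG; auto.
Qed.

Lemma Int_laplace f L x K S S2 : Good f -> 0 < L -> 0 < x <= 1 -> 0 <= K -> 0 <= S -> 0 <= S2 ->
  (forall y, 0 < y < x -> f y <= K * Rpower y (L - 1)) ->
  (forall y, x < y < 1 -> y * f y <= S) ->
  (forall y, 1 < y -> f y <= S2 / (y * y)) ->
  Int0inf f <= K * Rpower x L / L + S * (- ln x) + S2.
Proof.
  intros HG HL Hx HK HS HS2 H1 H2 H3.
  destruct HG as (Hl & Hn & HB).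
  apply Int_le_bnd. split; auto. intros a b Ha Hab.
  set (a' := Rmin a x). set (b' := Rmax b 1).
  assert (Ha' : 0 < a') by (unfold a'; apply Rmin_glb_lt; lra).
  assert (a' <= a) by apply Rmin_l. assert (a' <= x) by apply Rmin_r.
  assert (b <= b') by apply Rmax_l. assert (1 <= b') by apply Rmax_r.
  eapply Rle_trans. apply (RInt_mono_int f a' b' a b); auto; lra.
  rewrite <- (RInt_Chasles f a' x b') by (apply Hl; lra).
  rewrite <- (RInt_Chasles f x 1 b') by (apply Hl; lra).
  unfold plus; simpl.
  assert (I1 : RInt f a' x <= K * Rpower x L / L).
  { eapply Rle_trans. apply (RInt_le f (fun y => K * Rpower y (L - 1)) a' x); [lra | apply Hl; lra | |].
    apply ex_RInt_scal'. apply ex_RInt_cont_pos; auto. intros; apply cont_Rpower; auto.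
    intros y Hy. apply H1. lra.
    rewrite RInt_scal', RInt_pow; try lra. 2: apply ex_RInt_pow; lra.
    assert (0 < Rpower a' L) by (unfold Rpower; apply exp_pos).
    unfold Rdiv. rewrite Rmult_assoc. apply Rmult_le_compat_l; auto.
    apply Rmult_le_compat_r. left; apply Rinv_0_lt_compat; auto. lra. }
  assert (I2 : RInt f x 1 <= S * - ln x).
  { eapply Rle_trans. apply (RInt_le f (fun y => S * / y) x 1); [lra | apply Hl; lra | |].
    apply ex_RInt_scal'. apply ex_RInt_inv; lra.
    intros y Hy. apply (Rmult_le_reg_l y). lra. replace (y * (S * / y)) with S by (field; lra). apply H2. lra.
    rewrite RInt_scal', RInt_inv, ln_1; try lra. apply ex_RInt_inv; lra. }
  assert (I3 : RInt f 1 b' <= S2).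
  { eapply Rle_trans. apply (RInt_le f (fun y => S2 * / (y * y)) 1 b'); [lra | apply Hl; lra | |].
    apply ex_RInt_scal'. apply ex_RInt_cont_pos; try lra. intros. apply cont_der. auto_derive. nra.
    intros y Hy. unfold Rdiv in H3. apply H3. lra.
    rewrite RInt_scal', RInt_inv2; try lra. 2: apply ex_RInt_inv2; lra.
    rewrite Rinv_1. assert (0 < / b') by (apply Rinv_0_lt_compat; lra). nra. }
  lra.
Qed.

Lemma exp_le x y : x <= y -> exp x <= exp y.
Proof. intros [H|H]. left; apply exp_increasing; auto. subst; lra. Qed.
Lemma ln_le' x y : 0 < x -> x <= y -> ln x <= ln y.
Proof. intros Hx [H|H]. left; apply ln_increasing; auto. subst; lra. Qed.
Lemma ln_le_lin y : 0 < y -> ln y <= y - 1.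
Proof. intros. pose proof (exp_ineq1_le (ln y)). rewrite exp_ln in H0; lra. Qed.
Lemma ln_le_scaled y m : 0 < y -> 0 < m -> ln y <= y / m + ln m - 1.
Proof.
  intros Hy Hm. pose proof (ln_le_lin (y / m) ltac:(apply Rdiv_lt_0_compat; auto)).
  unfold Rdiv in H. rewrite ln_mult, ln_Rinv in H; auto. lra. apply Rinv_0_lt_compat; auto.
Qed.

Lemma tail_bound c k : 0 < k -> exists K, 0 < K /\ forall y, 1 <= y -> Rpower y c * exp (- (k * y)) <= K / (y * y).
Proof.
  intros Hk. set (m := (Rabs c + 2) / k).
  assert (Hm : 0 < m) by (unfold m; apply Rdiv_lt_0_compat; [pose proof (Rabs_pos c); lra | auto]).
  exists (exp ((Rabs c + 2) * (ln m - 1))). split. apply exp_pos.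
  intros y Hy. assert (Hy0 : 0 < y) by lra.
  assert (E : y * y = exp (2 * ln y)). 
  { replace (2 * ln y) with (ln y + ln y) by ring. rewrite exp_plus, exp_ln; auto. }
  unfold Rdiv. rewrite E, <- exp_Ropp. unfold Rpower. rewrite <- exp_plus, <- exp_plus.
  apply exp_le.
  pose proof (ln_le_scaled y m Hy0 Hm).
  assert (0 <= ln y). { rewrite <- ln_1. apply ln_le'; lra. }
  assert (c * ln y <= Rabs c * ln y). { apply Rmult_le_compat_r; auto. apply Rle_abs. }
  assert ((Rabs c + 2) * ln y <= (Rabs c + 2) * (y / m + ln m - 1)).
  { apply Rmult_le_compat_l; auto. pose proof (Rabs_pos c); lra. }
  assert ((Rabs c + 2) * (y / m) = k * y). { unfold m. field. split; [lra| pose proof (Rabs_pos c); lra]. }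
  nra.
Qed.

Lemma loc_int_piece (f f1 f2 : R -> R) c :
  (forall y, 0 < y -> continuous f1 y) -> (forall y, 0 < y -> continuous f2 y) ->
  (forall y, 0 < y -> y < c -> f y = f1 y) -> (forall y, 0 < y -> c < y -> f y = f2 y) ->
  loc_int f.
Proof.
  intros C1 C2 E1 E2 a b Ha Hab.
  destruct (Rle_dec b c) as [Hbc|Hbc].
  - apply (ex_RInt_ext f1). intros x Hx. rewrite Rmin_left, Rmax_right in Hx by lra. symmetry; apply E1; lra.
    apply ex_RInt_cont_pos; auto.
  - destruct (Rle_dec c a) as [Hca|Hca].
    + apply (ex_RInt_ext f2). intros x Hx. rewrite Rmin_left, Rmax_right in Hx by lra. symmetry; apply E2; lra.
      apply ex_RInt_cont_pos; auto.
    + apply (ex_RInt_Chasles f a c b).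
      * apply (ex_RInt_ext f1). intros x Hx. rewrite Rmin_left, Rmax_right in Hx by lra. symmetry; apply E1; lra.
        apply ex_RInt_cont_pos; auto; lra.
      * apply (ex_RInt_ext f2). intros x Hx. rewrite Rmin_left, Rmax_right in Hx by lra. symmetry; apply E2; lra.
        apply ex_RInt_cont_pos; auto; lra.
Qed.

Lemma loc_int_cont (f : R -> R) : (forall y, 0 < y -> continuous f y) -> loc_int f.
Proof. intros C a b Ha Hab. apply ex_RInt_cont_pos; auto. Qed.

Lemma laplace_bnd f L K S2 : loc_int f -> nonnegf f -> 0 < L -> 0 <= K -> 0 <= S2 ->
  (forall y, 0 < y < 1 -> f y <= K * Rpower y (L - 1)) ->
  (forall y, 1 < y -> f y <= S2 / (y * y)) -> Good f.
Proof.
  intros Hl Hn HL HK HS2 H1 H3. split; auto. split; auto.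
  exists (K / L + S2). intros a b Ha Hab.
  set (a' := Rmin a 1). set (b' := Rmax b 1).
  assert (Ha' : 0 < a') by (unfold a'; apply Rmin_glb_lt; lra).
  assert (a' <= a) by apply Rmin_l. assert (a' <= 1) by apply Rmin_r.
  assert (b <= b') by apply Rmax_l. assert (1 <= b') by apply Rmax_r.
  eapply Rle_trans. apply (RInt_mono_int f a' b' a b); auto; lra.
  rewrite <- (RInt_Chasles f a' 1 b') by (apply Hl; lra). unfold plus; simpl.
  assert (I1 : RInt f a' 1 <= K / L).
  { eapply Rle_trans. apply (RInt_le f (fun y => K * Rpower y (L - 1)) a' 1); [lra | apply Hl; lra | |].
    apply ex_RInt_scal'. apply ex_RInt_pow; lra.
    intros y Hy. apply H1. lra.
    rewrite RInt_scal', RInt_pow; try lra. 2: apply ex_RInt_pow; lra.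
    assert (0 < Rpower a' L) by (unfold Rpower; apply exp_pos).
    replace (Rpower 1 L) with 1 by (unfold Rpower; rewrite ln_1, Rmult_0_r, exp_0; auto).
    apply Rmult_le_compat_l; auto. unfold Rdiv. rewrite <- (Rmult_1_l (/ L)) at 2. apply Rmult_le_compat_r. left; apply Rinv_0_lt_compat; auto. lra. }
  assert (I3 : RInt f 1 b' <= S2).
  { eapply Rle_trans. apply (RInt_le f (fun y => S2 * / (y * y)) 1 b'); [lra | apply Hl; lra | |].
    apply ex_RInt_scal'. apply ex_RInt_inv2; lra.
    intros y Hy. unfold Rdiv in H3. apply H3. lra.
    rewrite RInt_scal', RInt_inv2; try lra. 2: apply ex_RInt_inv2; lra.
    rewrite Rinv_1. assert (0 < / b') by (apply Rinv_0_lt_compat; lra). nra. }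
  lra.
Qed.

Definition gint L := fun x => Rpower x (L - 1) * exp (- x).

Lemma Good_gint L : 0 < L -> Good (gint L).
Proof.
  intros HL. destruct (tail_bound (L - 1) 1 ltac:(lra)) as (K & HK & HKb).
  apply (laplace_bnd _ L 1 K); auto; try lra.
  - apply loc_int_cont. intros y Hy. unfold gint. apply cont_der. unfold Rpower. auto_derive. auto.
  - intros y Hy. unfold gint. apply Rmult_le_pos; left; unfold Rpower; apply exp_pos.
  - intros y Hy. unfold gint. rewrite Rmult_1_l. rewrite <- (Rmult_1_r (Rpower y (L - 1))) at 2.
    apply Rmult_le_compat_l. left; unfold Rpower; apply exp_pos.
    rewrite <- exp_0. apply exp_le. lra.
  - intros y Hy. unfold gint. replace (- y) with (- (1 * y)) by ring. apply HKb. lra.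
Qed.

Lemma Gamma_pos L : 0 < L -> 0 < GammaFn L.
Proof.
  intros HL. unfold GammaFn. fold (gint L).
  set (m := exp (- Rabs (L - 1) * ln 2 - 2)).
  assert (0 < m) by apply exp_pos.
  eapply Rlt_le_trans. 2: apply (Int_box (gint L) 1 2 m (Good_gint L HL)); try lra. lra.
  intros z Hz. unfold gint, m, Rpower. rewrite <- exp_plus. apply exp_le.
  assert (0 <= ln z) by (rewrite <- ln_1; apply ln_le'; lra).
  assert (ln z <= ln 2) by (apply ln_le'; lra).
  assert (- Rabs (L - 1) * ln 2 <= (L - 1) * ln z).
  { destruct (Rle_dec 0 (L - 1)). rewrite Rabs_right by lra. pose proof (ln_lt_2). nra.
    rewrite Rabs_left by lra. nra. }
  lra.
Qed.

Definition pdf L := gamma_pdf L (/ L).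
Definition CL L := / (Rpower (/ L) L * GammaFn L).

Lemma CL_pos L : 0 < L -> 0 < CL L.
Proof.
  intros HL. unfold CL. apply Rinv_0_lt_compat. apply Rmult_lt_0_compat.
  unfold Rpower; apply exp_pos. apply Gamma_pos; auto.
Qed.

Lemma pdf_eq L y : 0 < L -> pdf L y = CL L * Rpower y (L - 1) * exp (- (L * y)).
Proof. intros HL. unfold pdf, gamma_pdf, CL. f_equal. f_equal. field. lra. Qed.

Lemma pdf_cont L y : 0 < L -> 0 < y -> continuous (pdf L) y.
Proof.
  intros HL Hy. apply (continuous_ext (fun y => CL L * Rpower y (L - 1) * exp (- (L * y)))).
  intros; symmetry; apply pdf_eq; auto.
  apply cont_der. unfold Rpower. auto_derive. auto.
Qed.

Lemma pdf_pos L y : 0 < L -> 0 < y -> 0 < pdf L y.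
Proof.
  intros HL Hy. rewrite pdf_eq by auto. apply Rmult_lt_0_compat. apply Rmult_lt_0_compat.
  apply CL_pos; auto. unfold Rpower; apply exp_pos. apply exp_pos.
Qed.

Lemma pdf_le_pow L y : 0 < L -> 0 < y -> pdf L y <= CL L * Rpower y (L - 1).
Proof.
  intros HL Hy. rewrite pdf_eq by auto. rewrite <- (Rmult_1_r (CL L * Rpower y (L - 1))) at 2.
  apply Rmult_le_compat_l. apply Rmult_le_pos; left. apply CL_pos; auto. unfold Rpower; apply exp_pos.
  rewrite <- exp_0. apply exp_le. nra.
Qed.

Lemma pdf_tail L : 0 < L -> exists K, 0 < K /\ forall y, 1 <= y -> pdf L y <= K / (y * y).
Proof.
  intros HL. destruct (tail_bound (L - 1) L HL) as (K & HK & HKb).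
  exists (CL L * K). split. apply Rmult_lt_0_compat; auto. apply CL_pos; auto.
  intros y Hy. rewrite pdf_eq by (auto; lra). rewrite Rmult_assoc. unfold Rdiv. rewrite Rmult_assoc.
  apply Rmult_le_compat_l. left; apply CL_pos; auto. apply HKb; auto.
Qed.

Lemma pdf_lower L y Y : 0 < L -> 0 < y <= Y -> CL L * exp (- (L * Y)) * Rpower y (L - 1) <= pdf L y.
Proof.
  intros HL Hy. rewrite pdf_eq by (auto; lra).
  rewrite (Rmult_assoc (CL L)), (Rmult_comm (exp _)), <- Rmult_assoc.
  apply Rmult_le_compat_l. apply Rmult_le_pos; left. apply CL_pos; auto. unfold Rpower; apply exp_pos.
  apply exp_le. nra.
Qed.

Lemma Good_mul_pdf (phi : R -> R) L M : 0 < L -> 0 <= M -> loc_int (fun y => phi y * pdf L y) ->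
  (forall y, 0 < y -> 0 <= phi y <= M) -> Good (fun y => phi y * pdf L y).
Proof.
  intros HL HM Hl Hphi. destruct (pdf_tail L HL) as (K & HK & HKb).
  apply (laplace_bnd _ L (M * CL L) (M * K)); auto.
  - intros y Hy. apply Rmult_le_pos. apply Hphi; auto. left; apply pdf_pos; auto.
  - apply Rmult_le_pos; auto. left; apply CL_pos; auto.
  - apply Rmult_le_pos; lra.
  - intros y Hy. rewrite Rmult_assoc. apply Rmult_le_compat. apply Hphi; lra. left; apply pdf_pos; lra.
    apply Hphi; lra. apply pdf_le_pow; lra.
  - intros y Hy. unfold Rdiv. rewrite Rmult_assoc. apply Rmult_le_compat. apply Hphi; lra. left; apply pdf_pos; lra.
    apply Hphi; lra. apply HKb; lra.
Qed.

Lemma Good_pdf L : 0 < L -> Good (pdf L).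
Proof.
  intros HL. apply (Good_ext (fun y => 1 * pdf L y)). 2: intros; ring.
  apply (Good_mul_pdf (fun _ => 1) L 1 HL ltac:(lra)).
  - apply loc_int_cont. intros y Hy. apply (continuous_ext (pdf L)). intros; simpl; ring. apply pdf_cont; auto.
  - intros; lra.
Qed.

Lemma N_pos L : 0 < L -> 0 < Int0inf (pdf L).
Proof.
  intros HL. set (m := CL L * exp (- (L * 2)) * Rmin 1 (Rpower 2 (L - 1))).
  assert (0 < m). { unfold m. apply Rmult_lt_0_compat. apply Rmult_lt_0_compat. apply CL_pos; auto. apply exp_pos.
    apply Rmin_glb_lt. lra. unfold Rpower; apply exp_pos. }
  eapply Rlt_le_trans. 2: apply (Int_box (pdf L) 1 2 m (Good_pdf L HL)); try lra. lra.
  intros z Hz. eapply Rle_trans. 2: apply (pdf_lower L z 2); auto; lra.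
  unfold m. apply Rmult_le_compat_l. left; apply Rmult_lt_0_compat. apply CL_pos; auto. apply exp_pos.
  destruct (Rle_dec 0 (L - 1)).
  - eapply Rle_trans. apply Rmin_l. apply Rle_trans with (Rpower z 0); [rewrite Rpower_O; lra | apply Rle_Rpower; lra].
  - eapply Rle_trans. apply Rmin_r. unfold Rpower. apply exp_le.
    assert (ln z <= ln 2) by (apply ln_le'; lra). nra.
Qed.

Definition Aa rho rc := exp (rc * ln rho).
Definition Bb rho rs rc := exp ((rs + rc) * ln rho).
Definition gc rho rs rc := ((Bb rho rs rc - 1) / (Aa rho rc - 1) - 1) / rho.
Definition hind rho rc (h : R) := if Rle_dec (1 + rho * h) (Aa rho rc) then 1 else 0.
Definition Pl Lc rho rc := Int0inf (fun h => hind rho rc h * pdf Lc h).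
Definition Pg Lc rho rc := Int0inf (fun h => (1 - hind rho rc h) * pdf Lc h).
Definition Nn L := Int0inf (pdf L).
Definition Inner Lc rho rs rc g :=
  if Rle_dec g (gc rho rs rc) then Nn Lc / (rho * g + 1)
  else Pl Lc rho rc / (rho * g + 1) + Pg Lc rho rc / (rho * g + Bb rho rs rc).
Definition ED' Ls Lc rho rs rc := Int0inf (fun g => Inner Lc rho rs rc g * pdf Ls g).

Lemma ln2_pos : 0 < ln 2.
Proof. pose proof ln_lt_2; lra. Qed.

Lemma pow2_eq rho x : 0 < rho -> Rpower 2 (2 * (x / 2 * log2 rho)) = exp (x * ln rho).
Proof.
  intros H. unfold Rpower, log2. f_equal. pose proof ln2_pos. field. lra.
Qed.

Lemma log_cmp rho r x : 0 < rho -> 0 < x -> (/ 2 * log2 x <= r / 2 * log2 rho <-> x <= exp (r * ln rho)).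
Proof.
  intros Hr Hx. pose proof ln2_pos. unfold log2. split; intros H'.
  - rewrite <- (exp_ln x) by auto. apply exp_le.
    apply (Rmult_le_compat_l (2 * ln 2)) in H'; [|lra].
    replace (2 * ln 2 * (/ 2 * (ln x / ln 2))) with (ln x) in H' by (field; lra).
    replace (2 * ln 2 * (r / 2 * (ln rho / ln 2))) with (r * ln rho) in H' by (field; lra). auto.
  - apply ln_le' in H'; auto. rewrite ln_exp in H'.
    apply (Rmult_le_reg_l (2 * ln 2)); [lra|].
    replace (2 * ln 2 * (/ 2 * (ln x / ln 2))) with (ln x) by (field; lra).
    replace (2 * ln 2 * (r / 2 * (ln rho / ln 2))) with (r * ln rho) by (field; lra). auto.
Qed.

Lemma log_cmp2 rho r x : 0 < rho -> 0 < x -> (r / 2 * log2 rho <= / 2 * log2 x <-> exp (r * ln rho) <= x).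
Proof.
  intros Hr Hx. pose proof ln2_pos. unfold log2. split; intros H'.
  - rewrite <- (exp_ln x) by auto. apply exp_le.
    apply (Rmult_le_compat_l (2 * ln 2)) in H'; [|lra].
    replace (2 * ln 2 * (/ 2 * (ln x / ln 2))) with (ln x) in H' by (field; lra).
    replace (2 * ln 2 * (r / 2 * (ln rho / ln 2))) with (r * ln rho) in H' by (field; lra). auto.
  - apply ln_le' in H'; [|apply exp_pos]. rewrite ln_exp in H'.
    apply (Rmult_le_reg_l (2 * ln 2)); [lra|].
    replace (2 * ln 2 * (/ 2 * (ln x / ln 2))) with (ln x) by (field; lra).
    replace (2 * ln 2 * (r / 2 * (ln rho / ln 2))) with (r * ln rho) by (field; lra). auto.
Qed.

Lemma Aa_gt1 rho rc : 1 < rho -> 0 < rc -> 1 < Aa rho rc.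
Proof.
  intros. unfold Aa. rewrite <- exp_0. apply exp_increasing.
  assert (0 < ln rho) by (rewrite <- ln_1; apply ln_increasing; lra). nra.
Qed.

Lemma gout_iff rho rs rc g : 1 < rho -> 0 < rc -> 0 < g ->
  (Aa rho rc <= 1 + (Bb rho rs rc - 1) / (1 + rho * g) <-> g <= gc rho rs rc).
Proof.
  intros Hr Hc Hg. pose proof (Aa_gt1 rho rc Hr Hc). unfold gc.
  assert (0 < 1 + rho * g) by nra.
  split; intros H'.
  - apply (Rmult_le_reg_l rho). lra. replace (rho * (((Bb rho rs rc - 1) / (Aa rho rc - 1) - 1) / rho))
      with ((Bb rho rs rc - 1) / (Aa rho rc - 1) - 1) by (field; lra).
    assert ((Aa rho rc - 1) * (1 + rho * g) <= Bb rho rs rc - 1).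
    { apply (Rmult_le_compat_r (1 + rho * g)) in H'; [|lra].
      replace ((1 + (Bb rho rs rc - 1) / (1 + rho * g)) * (1 + rho * g)) with (1 + rho * g + (Bb rho rs rc - 1)) in H' by (field; lra).
      nra. }
    apply (Rmult_le_reg_l (Aa rho rc - 1)). lra.
    replace ((Aa rho rc - 1) * ((Bb rho rs rc - 1) / (Aa rho rc - 1) - 1)) with (Bb rho rs rc - 1 - (Aa rho rc - 1)) by (field; lra).
    nra.
  - apply (Rmult_le_compat_l rho) in H'; [|lra].
    replace (rho * (((Bb rho rs rc - 1) / (Aa rho rc - 1) - 1) / rho))
      with ((Bb rho rs rc - 1) / (Aa rho rc - 1) - 1) in H' by (field; lra).
    apply (Rmult_le_compat_l (Aa rho rc - 1)) in H'; [|lra].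
    replace ((Aa rho rc - 1) * ((Bb rho rs rc - 1) / (Aa rho rc - 1) - 1)) with (Bb rho rs rc - 1 - (Aa rho rc - 1)) in H' by (field; lra).
    apply (Rmult_le_reg_r (1 + rho * g)). lra.
    replace ((1 + (Bb rho rs rc - 1) / (1 + rho * g)) * (1 + rho * g)) with (1 + rho * g + (Bb rho rs rc - 1)) by (field; lra).
    nra.
Qed.

Lemma dist_eq rs rc rho h g : 1 < rho -> 0 <= rs -> 0 < rc -> 0 < h -> 0 < g ->
  dist_s (rs / 2 * log2 rho) (rc / 2 * log2 rho) (rho * h) (rho * g) =
  if Rle_dec g (gc rho rs rc) then / (rho * g + 1)
  else hind rho rc h / (rho * g + 1) + (1 - hind rho rc h) / (rho * g + Bb rho rs rc).
Proof.
  intros Hr Hs Hc Hh Hg.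
  assert (Hl : 0 < ln rho) by (rewrite <- ln_1; apply ln_increasing; lra).
  assert (E0 : Dd 0 (rho * g) = / (rho * g + 1)).
  { unfold Dd. replace (2 * 0) with 0 by ring. rewrite Rpower_O by lra. auto. }
  assert (E1 : Dd (rs / 2 * log2 rho + rc / 2 * log2 rho) (rho * g) = / (rho * g + Bb rho rs rc)).
  { unfold Dd. replace (rs / 2 * log2 rho + rc / 2 * log2 rho) with ((rs + rc) / 2 * log2 rho) by field.
    rewrite pow2_eq by lra. auto. }
  assert (Hpos : 0 < 1 + rho * h) by nra.
  assert (Hpos2 : 0 < 1 + (Rpower 2 (2 * (rs / 2 * log2 rho + rc / 2 * log2 rho)) - 1) / (1 + rho * g)).
  { replace (rs / 2 * log2 rho + rc / 2 * log2 rho) with ((rs + rc) / 2 * log2 rho) by field.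
    rewrite pow2_eq by lra.
    assert (1 <= exp ((rs + rc) * ln rho)). { rewrite <- exp_0. apply exp_le.
      nra. }
    assert (0 < 1 + rho * g) by nra. unfold Rdiv.
    assert (0 <= (exp ((rs + rc) * ln rho) - 1) * / (1 + rho * g)).
    { apply Rmult_le_pos. lra. left; apply Rinv_0_lt_compat; auto. } lra. }
  assert (Hh' : / 2 * log2 (1 + rho * h) <= rc / 2 * log2 rho <-> 1 + rho * h <= Aa rho rc).
  { apply log_cmp; auto. lra. }
  assert (Hg' : rc / 2 * log2 rho <= / 2 * log2 (1 + (Rpower 2 (2 * (rs / 2 * log2 rho + rc / 2 * log2 rho)) - 1) / (1 + rho * g)) <-> g <= gc rho rs rc).
  { rewrite log_cmp2 by (auto; lra).
    replace (rs / 2 * log2 rho + rc / 2 * log2 rho) with ((rs + rc) / 2 * log2 rho) by field.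
    rewrite pow2_eq by lra. fold (Bb rho rs rc). apply gout_iff; auto. }
  unfold dist_s, in_Os, hind.
  destruct (Rle_dec (/ 2 * log2 (1 + rho * h)) (rc / 2 * log2 rho)) as [H1|H1];
  destruct (Rle_dec (1 + rho * h) (Aa rho rc)) as [H2|H2];
  destruct (Rle_dec g (gc rho rs rc)) as [H3|H3];
  try destruct (Rle_dec (rc / 2 * log2 rho) _) as [H4|H4].
  all: first [ exfalso; apply H2; apply Hh'; exact H1 | exfalso; apply H1; apply Hh'; exact H2
             | exfalso; apply H3; apply Hg'; exact H4 | exfalso; apply H4; apply Hg'; exact H3
             | rewrite E0; unfold Rdiv; ring | rewrite E1; unfold Rdiv; ring ].
Qed.

Lemma Bb_ge1 rho rs rc : 1 < rho -> 0 <= rs -> 0 < rc -> 1 <= Bb rho rs rc.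
Proof.
  intros. unfold Bb. rewrite <- exp_0. apply exp_le.
  assert (0 < ln rho) by (rewrite <- ln_1; apply ln_increasing; lra). nra.
Qed.

Lemma hind_01 rho rc h : 0 <= hind rho rc h <= 1.
Proof. unfold hind. destruct Rle_dec; lra. Qed.

Lemma cont_cpdf L c y : 0 < L -> 0 < y -> continuous (fun h => c * pdf L h) y.
Proof.
  intros HL Hy. apply (continuous_mult (fun _ => c) (pdf L)). apply continuous_const. apply pdf_cont; auto.
Qed.

Lemma Good_hl Lc rho rc : 0 < Lc -> 1 < rho -> Good (fun h => hind rho rc h * pdf Lc h).
Proof.
  intros HL Hr. apply (Good_mul_pdf _ Lc 1 HL ltac:(lra)).
  - apply (loc_int_piece _ (fun h => 1 * pdf Lc h) (fun h => 0 * pdf Lc h) ((Aa rho rc - 1) / rho)).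
    + intros; apply cont_cpdf; auto.
    + intros; apply cont_cpdf; auto.
    + intros y Hy Hc. unfold hind. destruct Rle_dec as [|n]; auto. exfalso; apply n.
      apply (Rmult_lt_compat_l rho) in Hc; [|lra]. replace (rho * ((Aa rho rc - 1) / rho)) with (Aa rho rc - 1) in Hc by (field; lra). lra.
    + intros y Hy Hc. unfold hind. destruct Rle_dec as [r|]; auto. exfalso.
      apply (Rmult_lt_compat_l rho) in Hc; [|lra]. replace (rho * ((Aa rho rc - 1) / rho)) with (Aa rho rc - 1) in Hc by (field; lra). lra.
  - intros; apply hind_01.
Qed.

Lemma Good_hg Lc rho rc : 0 < Lc -> 1 < rho -> Good (fun h => (1 - hind rho rc h) * pdf Lc h).
Proof.
  intros HL Hr. apply (Good_mul_pdf _ Lc 1 HL ltac:(lra)).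
  - apply (loc_int_piece _ (fun h => 0 * pdf Lc h) (fun h => 1 * pdf Lc h) ((Aa rho rc - 1) / rho)).
    + intros; apply cont_cpdf; auto.
    + intros; apply cont_cpdf; auto.
    + intros y Hy Hc. unfold hind. destruct Rle_dec as [|n]. f_equal; ring. exfalso; apply n.
      apply (Rmult_lt_compat_l rho) in Hc; [|lra]. replace (rho * ((Aa rho rc - 1) / rho)) with (Aa rho rc - 1) in Hc by (field; lra). lra.
    + intros y Hy Hc. unfold hind. destruct Rle_dec as [r|]. exfalso.
      apply (Rmult_lt_compat_l rho) in Hc; [|lra]. replace (rho * ((Aa rho rc - 1) / rho)) with (Aa rho rc - 1) in Hc by (field; lra). lra.
      f_equal; ring.
  - intros; pose proof (hind_01 rho rc y); lra.
Qed.

Lemma Pl_nonneg Lc rho rc : 0 < Lc -> 1 < rho -> 0 <= Pl Lc rho rc.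
Proof. intros. apply Int_nonneg. apply Good_hl; auto. Qed.
Lemma Pg_nonneg Lc rho rc : 0 < Lc -> 1 < rho -> 0 <= Pg Lc rho rc.
Proof. intros. apply Int_nonneg. apply Good_hg; auto. Qed.
Lemma Nn_pos L : 0 < L -> 0 < Nn L.
Proof. intros. apply N_pos; auto. Qed.

Lemma inner_eq Lc rs rc rho g : 0 < Lc -> 1 < rho -> 0 <= rs -> 0 < rc -> 0 < g ->
  Int0inf (fun h => dist_s (rs / 2 * log2 rho) (rc / 2 * log2 rho) (rho * h) (rho * g) * gamma_pdf Lc (/ Lc) h)
  = Inner Lc rho rs rc g.
Proof.
  intros HL Hr Hs Hc Hg.
  assert (Hd1 : 0 < rho * g + 1) by nra.
  pose proof (Bb_ge1 rho rs rc Hr Hs Hc).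
  assert (Hd2 : 0 < rho * g + Bb rho rs rc) by nra.
  assert (G1 := Good_hl Lc rho rc HL Hr). assert (G2 := Good_hg Lc rho rc HL Hr).
  assert (c1 : 0 <= / (rho * g + 1)) by (left; apply Rinv_0_lt_compat; auto).
  assert (c2 : 0 <= / (rho * g + Bb rho rs rc)) by (left; apply Rinv_0_lt_compat; auto).
  unfold Inner. destruct (Rle_dec g (gc rho rs rc)) as [H1|H1].
  - rewrite <- (Int_ext (fun h => / (rho * g + 1) * pdf Lc h)).
    + rewrite Int_scal. unfold Nn, Rdiv. ring. left; apply Rinv_0_lt_compat; auto. apply Good_pdf; auto.
    + apply Good_scal. left; apply Rinv_0_lt_compat; auto. apply Good_pdf; auto.
    + intros h Hh. rewrite dist_eq by auto. destruct Rle_dec; [|tauto]. reflexivity.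
  - rewrite <- (Int_ext (fun h => / (rho * g + 1) * (hind rho rc h * pdf Lc h) + / (rho * g + Bb rho rs rc) * ((1 - hind rho rc h) * pdf Lc h))).
    + rewrite (Int_plus _ _ (Good_scal _ _ c1 G1) (Good_scal _ _ c2 G2)), (Int_scal _ _ c1 G1), (Int_scal _ _ c2 G2).
      unfold Pl, Pg, Rdiv. ring.
    + exact (Good_plus _ _ (Good_scal _ _ c1 G1) (Good_scal _ _ c2 G2)).
    + intros h Hh. rewrite dist_eq by auto. destruct Rle_dec; [tauto|]. unfold pdf. unfold Rdiv. ring.
Qed.

Lemma Good_outer Ls Lc rho rs rc : 0 < Ls -> 0 < Lc -> 1 < rho -> 0 <= rs -> 0 < rc ->
  Good (fun g => Inner Lc rho rs rc g * pdf Ls g).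
Proof.
  intros HLs HLc Hr Hs Hc.
  pose proof (Bb_ge1 rho rs rc Hr Hs Hc).
  pose proof (Pl_nonneg Lc rho rc HLc Hr). pose proof (Pg_nonneg Lc rho rc HLc Hr). pose proof (Nn_pos Lc HLc).
  apply (Good_mul_pdf _ Ls (Nn Lc + Pl Lc rho rc + Pg Lc rho rc) HLs ltac:(lra)).
  - apply (loc_int_piece _ (fun g => Nn Lc / (rho * g + 1) * pdf Ls g)
        (fun g => (Pl Lc rho rc / (rho * g + 1) + Pg Lc rho rc / (rho * g + Bb rho rs rc)) * pdf Ls g) (gc rho rs rc)).
    + intros y Hy. apply (continuous_mult (fun g => Nn Lc / (rho * g + 1)) (pdf Ls)). apply cont_der. auto_derive. nra. apply pdf_cont; auto.
    + intros y Hy. apply (continuous_mult (fun g => Pl Lc rho rc / (rho * g + 1) + Pg Lc rho rc / (rho * g + Bb rho rs rc)) (pdf Ls)).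
      apply cont_der. auto_derive. nra. apply pdf_cont; auto.
    + intros y Hy Hy2. unfold Inner. destruct Rle_dec; auto. lra.
    + intros y Hy Hy2. unfold Inner. destruct Rle_dec; auto. lra.
  - intros y Hy. assert (0 < rho * y) by nra. unfold Inner. destruct Rle_dec.
    + split. apply Rdiv_le_0_compat; lra. apply Rle_trans with (Nn Lc). 
      unfold Rdiv. rewrite <- (Rmult_1_r (Nn Lc)) at 2. apply Rmult_le_compat_l. lra.
      rewrite <- Rinv_1. apply Rinv_le_contravar; lra. lra.
    + assert (Pl Lc rho rc / (rho * y + 1) <= Pl Lc rho rc).
      { unfold Rdiv. rewrite <- (Rmult_1_r (Pl Lc rho rc)) at 2. apply Rmult_le_compat_l. lra.
        rewrite <- Rinv_1. apply Rinv_le_contravar; lra. }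
      assert (Pg Lc rho rc / (rho * y + Bb rho rs rc) <= Pg Lc rho rc).
      { unfold Rdiv. rewrite <- (Rmult_1_r (Pg Lc rho rc)) at 2. apply Rmult_le_compat_l. lra.
        rewrite <- Rinv_1. apply Rinv_le_contravar; lra. }
      split. apply Rplus_le_le_0_compat; apply Rdiv_le_0_compat; lra. lra.
Qed.

Lemma ED_eq Ls Lc rho rs rc : 0 < Ls -> 0 < Lc -> 1 < rho -> 0 <= rs -> 0 < rc ->
  EDs Ls Lc rho (rs / 2 * log2 rho) (rc / 2 * log2 rho) = ED' Ls Lc rho rs rc.
Proof.
  intros. unfold EDs, ED'. symmetry. apply Int_ext. apply Good_outer; auto.
  intros g Hg. rewrite inner_eq by auto. reflexivity.
Qed.

Lemma Rp_pos x c : 0 < Rpower x c.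
Proof. unfold Rpower; apply exp_pos. Qed.
Lemma Rp_plus x a b : Rpower x (a + b) = Rpower x a * Rpower x b.
Proof. apply Rpower_plus. Qed.
Lemma Rp_mono x a b : 1 <= x -> a <= b -> Rpower x a <= Rpower x b.
Proof. intros; apply Rle_Rpower; auto. Qed.
Lemma Rp_base_le a b c : 0 <= c -> 0 < a <= b -> Rpower a c <= Rpower b c.
Proof. intros; apply Rle_Rpower_l; auto. Qed.
Lemma Rp_base_ge a b c : c <= 0 -> 0 < a <= b -> Rpower b c <= Rpower a c.
Proof.
  intros Hc [Ha Hab]. unfold Rpower. apply exp_le.
  assert (ln a <= ln b) by (apply ln_le'; lra). nra.
Qed.
Lemma Rp_mul a b c : 0 < a -> 0 < b -> Rpower (a * b) c = Rpower a c * Rpower b c.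
Proof. intros. rewrite Rpower_mult_distr; auto. Qed.
Lemma Rp_inv x c : 0 < x -> Rpower (/ x) c = Rpower x (- c).
Proof. intros. unfold Rpower. rewrite ln_Rinv by auto. f_equal; ring. Qed.
Lemma Rp_0 x : 0 < x -> Rpower x 0 = 1.
Proof. intros; apply Rpower_O; auto. Qed.
Lemma Rp_1 x : 0 < x -> Rpower x 1 = x.
Proof. intros; apply Rpower_1; auto. Qed.
Lemma Rp_pow x a b : Rpower (Rpower x a) b = Rpower x (a * b).
Proof. apply Rpower_mult. Qed.
Lemma Rp_one c : Rpower 1 c = 1.
Proof. unfold Rpower. rewrite ln_1, Rmult_0_r, exp_0. auto. Qed.
Lemma Rp_ge1 x c : 1 <= x -> 0 <= c -> 1 <= Rpower x c.
Proof. intros. rewrite <- (Rp_one c). apply Rp_base_le; auto; lra. Qed.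
Lemma Rp_minus1 v L : 0 < v -> Rpower v L = v * Rpower v (L - 1).
Proof. intros. replace L with (1 + (L - 1)) at 1 by ring. rewrite Rp_plus, Rp_1; auto. Qed.
Lemma Rp_exp_ln x c : Rpower x c = exp (c * ln x).
Proof. reflexivity. Qed.

Lemma large_rho x K : 0 < x -> exists r0, 1 < r0 /\ forall rho, r0 < rho -> K <= Rpower rho x.
Proof.
  intros Hx. exists (exp (Rabs (ln (Rabs K + 1)) / x + 1)). split.
  - assert (0 <= Rabs (ln (Rabs K + 1)) / x) by (apply Rdiv_le_0_compat; [apply Rabs_pos | lra]).
    pose proof (exp_ineq1_le (Rabs (ln (Rabs K + 1)) / x + 1)). lra.
  - intros rho Hr. assert (Hr0 : 0 < rho). { pose proof (exp_pos (Rabs (ln (Rabs K + 1)) / x + 1)); lra. }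
    apply Rle_trans with (Rabs K + 1). pose proof (Rle_abs K); lra.
    rewrite <- (exp_ln (Rabs K + 1)) by (pose proof (Rabs_pos K); lra).
    unfold Rpower. apply exp_le.
    apply Rlt_le in Hr. apply ln_le' in Hr; [|apply exp_pos]. rewrite ln_exp in Hr.
    apply Rmult_le_compat_l with (r := x) in Hr; [|lra].
    replace (x * (Rabs (ln (Rabs K + 1)) / x + 1)) with (Rabs (ln (Rabs K + 1)) + x) in Hr by (field; lra).
    pose proof (Rle_abs (ln (Rabs K + 1))). nra.
Qed.

Definition cb L := CL L * exp (- (L * 8)) * Rmin 1 (Rpower 2 (L - 1)).
Lemma cb_pos L : 0 < L -> 0 < cb L.
Proof.
  intros. unfold cb. apply Rmult_lt_0_compat. apply Rmult_lt_0_compat. apply CL_pos; auto. apply exp_pos.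
  apply Rmin_glb_lt. lra. apply Rp_pos.
Qed.

Lemma pow_box L x y : 0 < x -> x <= y <= 2 * x -> Rmin 1 (Rpower 2 (L - 1)) * Rpower x (L - 1) <= Rpower y (L - 1).
Proof.
  intros Hx Hy. destruct (Rle_dec 0 (L - 1)).
  - eapply Rle_trans. apply Rmult_le_compat_r. left; apply Rp_pos. apply Rmin_l. rewrite Rmult_1_l.
    apply Rp_base_le; lra.
  - eapply Rle_trans. apply Rmult_le_compat_r. left; apply Rp_pos. apply Rmin_r.
    rewrite <- Rp_mul by lra. apply Rp_base_ge; lra.
Qed.

Lemma Int_box_pdf (phi : R -> R) L x m : 0 < L -> 0 < x <= 4 -> 0 <= m ->
  Good (fun y => phi y * pdf L y) -> (forall y, x < y < 2 * x -> m <= phi y) ->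
  m * cb L * Rpower x L <= Int0inf (fun y => phi y * pdf L y).
Proof.
  intros HL Hx Hm HG Hphi.
  eapply Rle_trans. 2: apply (Int_box _ x (2 * x) (m * cb L * Rpower x (L - 1)) HG); try lra.
  - rewrite (Rp_minus1 x L) by lra. replace (2 * x - x) with x by ring. lra.
  - intros z Hz. rewrite Rmult_assoc. apply Rmult_le_compat. auto. apply Rmult_le_pos; left. apply cb_pos; auto. apply Rp_pos.
    apply Hphi; auto.
    eapply Rle_trans. 2: apply (pdf_lower L z 8); auto; lra.
    unfold cb. rewrite Rmult_assoc. apply Rmult_le_compat_l. left; apply Rmult_lt_0_compat. apply CL_pos; auto. apply exp_pos.
    apply pow_box; lra.
Qed.

Lemma Rp_le_1 x c : 1 <= x -> c <= 0 -> Rpower x c <= 1.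
Proof. intros. apply Rle_trans with (Rpower x 0). apply Rp_mono; auto. rewrite Rp_0; lra. Qed.

Definition tt rho rc := (Aa rho rc - 1) / rho.

Lemma ln_pos rho : 1 < rho -> 0 < ln rho.
Proof. intros; rewrite <- ln_1; apply ln_increasing; lra. Qed.

Lemma Aa_E rho rc : Aa rho rc = Rpower rho rc.
Proof. reflexivity. Qed.

Lemma hind_1 rho rc h : 1 < rho -> h <= tt rho rc -> hind rho rc h = 1.
Proof.
  intros Hr H. unfold hind, tt in *. destruct Rle_dec as [|n]; auto. exfalso; apply n.
  apply (Rmult_le_compat_l rho) in H; [|lra]. replace (rho * ((Aa rho rc - 1) / rho)) with (Aa rho rc - 1) in H by (field; lra). lra.
Qed.
Lemma hind_0 rho rc h : 1 < rho -> tt rho rc < h -> hind rho rc h = 0.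
Proof.
  intros Hr H. unfold hind, tt in *. destruct Rle_dec as [r|]; auto. exfalso.
  apply (Rmult_lt_compat_l rho) in H; [|lra]. replace (rho * ((Aa rho rc - 1) / rho)) with (Aa rho rc - 1) in H by (field; lra). lra.
Qed.

Lemma tt_pos rho rc : 1 < rho -> 0 < rc -> 0 < tt rho rc.
Proof. intros. unfold tt. pose proof (Aa_gt1 rho rc H H0). apply Rdiv_lt_0_compat; lra. Qed.

Lemma tt_le rho rc : 1 < rho -> tt rho rc <= Rpower rho (rc - 1).
Proof.
  intros. unfold tt. rewrite Rpower_inv_y by lra.
  unfold Rdiv. apply Rmult_le_compat_r. left; apply Rinv_0_lt_compat; lra. unfold Aa. fold (Rpower rho rc). lra.
Qed.

Definition pM Lc rc := Lc * Rmax (1 - rc) 0.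

Lemma Pl_le_N Lc rho rc : 0 < Lc -> 1 < rho -> Pl Lc rho rc <= Nn Lc.
Proof.
  intros. unfold Pl, Nn. apply Int_mono. apply Good_hl; auto. apply Good_pdf; auto.
  intros. pose proof (hind_01 rho rc x). pose proof (pdf_pos Lc x H H1). nra.
Qed.
Lemma Pg_le_N Lc rho rc : 0 < Lc -> 1 < rho -> Pg Lc rho rc <= Nn Lc.
Proof.
  intros. unfold Pg, Nn. apply Int_mono. apply Good_hg; auto. apply Good_pdf; auto.
  intros. pose proof (hind_01 rho rc x). pose proof (pdf_pos Lc x H H1). nra.
Qed.

Lemma Pl_upper Lc rc : 0 < Lc -> 0 < rc -> exists K, 0 < K /\ forall rho, 1 < rho ->
  Pl Lc rho rc <= K * Rpower rho (- pM Lc rc).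
Proof.
  intros HL Hc. exists (CL Lc / Lc + Nn Lc). split.
  { pose proof (CL_pos Lc HL). pose proof (Nn_pos Lc HL). pose proof (Rdiv_lt_0_compat _ _ H HL). lra. }
  intros rho Hr. pose proof (CL_pos Lc HL). pose proof (Nn_pos Lc HL).
  assert (0 < CL Lc / Lc) by (apply Rdiv_lt_0_compat; auto).
  unfold pM. destruct (Rle_dec rc 1).
  - rewrite Rmax_left by lra.
    pose proof (tt_pos rho rc Hr Hc) as Ht. pose proof (tt_le rho rc Hr) as Ht2.
    assert (Ht1 : tt rho rc <= 1). { eapply Rle_trans. apply Ht2. apply Rp_le_1; lra. }
    eapply Rle_trans. apply (Int_laplace _ Lc (tt rho rc) (CL Lc) 0 0); try lra.
    + apply Good_hl; auto.
    + intros y Hy. eapply Rle_trans. 2: apply pdf_le_pow; lra. pose proof (hind_01 rho rc y). pose proof (pdf_pos Lc y HL ltac:(lra)). nra.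
    + intros y Hy. rewrite hind_0 by (auto; lra). lra.
    + intros y Hy. rewrite hind_0 by (auto; lra). replace (0 / (y * y)) with 0 by (field; lra). lra.
    + rewrite !Rmult_0_l, !Rplus_0_r.
      assert (Rpower (tt rho rc) Lc <= Rpower rho (- (Lc * (1 - rc)))).
      { eapply Rle_trans. apply Rp_base_le. lra. split; [exact Ht | exact Ht2]. rewrite Rp_pow. right; f_equal; ring. }
      pose proof (Rp_pos rho (- (Lc * (1 - rc)))).
      replace (CL Lc * Rpower (tt rho rc) Lc / Lc) with (CL Lc / Lc * Rpower (tt rho rc) Lc) by (field; lra).
      nra.
  - rewrite Rmax_right by lra. rewrite Rmult_0_r, Ropp_0, Rp_0 by lra.
    pose proof (Pl_le_N Lc rho rc HL Hr). lra.
Qed.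

Lemma Pl_lower Lc rc : 0 < Lc -> 0 < rc -> exists k r0, 0 < k /\ 1 < r0 /\ forall rho, r0 < rho ->
  k * Rpower rho (- pM Lc rc) <= Pl Lc rho rc.
Proof.
  intros HL Hc. unfold pM. destruct (Rle_dec rc 1) as [H1|H1].
  - rewrite Rmax_left by lra.
    destruct (large_rho rc 2 Hc) as (r0 & Hr0 & Hr).
    exists (cb Lc * Rpower (/ 4) Lc), r0. split. apply Rmult_lt_0_compat. apply cb_pos; auto. apply Rp_pos.
    split; auto. intros rho Hrho. specialize (Hr rho Hrho).
    assert (Hr1 : 1 < rho) by lra.
    assert (Ht : Rpower rho (rc - 1) / 2 <= tt rho rc).
    { unfold tt. rewrite Rpower_inv_y by lra. unfold Aa. fold (Rpower rho rc).
      unfold Rdiv. rewrite Rmult_assoc, (Rmult_comm (/ rho)), <- Rmult_assoc. apply Rmult_le_compat_r.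
      left; apply Rinv_0_lt_compat; lra. lra. }
    pose proof (tt_le rho rc Hr1) as Ht2.
    assert (Hpos : 0 < Rpower rho (rc - 1)) by apply Rp_pos.
    assert (Hle1 : Rpower rho (rc - 1) <= 1) by (apply Rp_le_1; lra).
    eapply Rle_trans. 2: apply (Int_box_pdf (hind rho rc) Lc (tt rho rc / 2) 1); try lra.
    + rewrite Rmult_1_l, Rmult_assoc. apply Rmult_le_compat_l. left; apply cb_pos; auto.
      replace (- (Lc * (1 - rc))) with ((rc - 1) * Lc) by ring. rewrite <- Rp_pow.
      rewrite <- Rp_mul by (try lra; apply Rinv_0_lt_compat; lra). apply Rp_base_le. lra. split.
      apply Rmult_lt_0_compat; auto. apply Rinv_0_lt_compat; lra. lra.
    + apply Good_hl; auto.
    + intros y Hy. rewrite hind_1 by (auto; lra). lra.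
  - rewrite Rmax_right by lra. rewrite Rmult_0_r, Ropp_0.
    exists (cb Lc * Rpower (/ 4) Lc), 2. split. apply Rmult_lt_0_compat. apply cb_pos; auto. apply Rp_pos.
    split. lra. intros rho Hrho. rewrite Rp_0 by lra.
    assert (1 / 2 <= tt rho rc).
    { unfold tt. unfold Aa. fold (Rpower rho rc). assert (rho <= Rpower rho rc). { rewrite <- (Rp_1 rho) at 1 by lra. apply Rp_mono; lra. }
      apply (Rmult_le_reg_l rho). lra. replace (rho * ((Rpower rho rc - 1) / rho)) with (Rpower rho rc - 1) by (field; lra). lra. }
    eapply Rle_trans. 2: apply (Int_box_pdf (hind rho rc) Lc (/ 4) 1); try lra.
    + right; ring.
    + apply Good_hl; auto; lra.
    + intros y Hy. rewrite hind_1 by lra. lra.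
Qed.

Lemma Pg_lower Lc rc : 0 < Lc -> 0 < rc -> rc <= 1 -> forall rho, 1 < rho -> cb Lc <= Pg Lc rho rc.
Proof.
  intros HL Hc H1 rho Hr.
  assert (tt rho rc <= 1). { eapply Rle_trans. apply tt_le; auto. apply Rp_le_1; lra. }
  eapply Rle_trans. 2: apply (Int_box_pdf (fun h => 1 - hind rho rc h) Lc 1 1); try lra.
  - rewrite Rp_one. lra.
  - apply Good_hg; auto.
  - intros y Hy. rewrite hind_0 by (auto; lra). lra.
Qed.

Definition mL L := Rmin L 1.
Definition ap a := Rmin a 1.
Definition Rx1 L a := L - ap a * Rmax (L - 1) 0.
Definition Rx2 L M a b := pM M b + ap a + (1 - ap a) * mL L.
Definition Rx3 L a b := (a + b) + (1 - Rmin (a + b) 1) * mL L.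
Definition dd L M a b := if Rle_dec a 0 then Rmin (Rx2 L M a b) (Rx3 L a b)
  else Rmin (Rx1 L a) (Rmin (Rx2 L M a b) (Rx3 L a b)).

Lemma from_log X c e rho : 0 < X -> ln X <= c + e * ln rho -> X <= exp c * Rpower rho e.
Proof.
  intros HX H. rewrite <- (exp_ln X) by auto. unfold Rpower. rewrite <- exp_plus. apply exp_le. lra.
Qed.

Lemma ln_D1 rho y : 1 < rho -> 0 < y -> ln (/ (rho * y + 1)) <= 0 /\ ln (/ (rho * y + 1)) <= - (ln rho + ln y).
Proof.
  intros Hr Hy. assert (0 < rho * y) by nra.
  rewrite ln_Rinv by lra. split.
  - assert (0 <= ln (rho * y + 1)). { rewrite <- ln_1. apply ln_le'; lra. } lra.
  - rewrite <- ln_mult by lra. assert (ln (rho * y) <= ln (rho * y + 1)) by (apply ln_le'; lra). lra.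
Qed.

Lemma ln_D3 rho y Bv : 1 < rho -> 0 < y -> 0 < Bv -> ln (/ (rho * y + Bv)) <= - ln Bv /\ ln (/ (rho * y + Bv)) <= - (ln rho + ln y).
Proof.
  intros Hr Hy HB. assert (0 < rho * y) by nra.
  rewrite ln_Rinv by lra. split.
  - assert (ln Bv <= ln (rho * y + Bv)) by (apply ln_le'; lra). lra.
  - rewrite <- ln_mult by lra. assert (ln (rho * y) <= ln (rho * y + Bv)) by (apply ln_le'; lra). lra.
Qed.

Lemma ln_m y : 0 < y -> ln (Rmin y 1) <= 0 /\ ln (Rmin y 1) <= ln y.
Proof.
  intros Hy. assert (0 < Rmin y 1) by (apply Rmin_glb_lt; lra). split.
  - rewrite <- ln_1. apply ln_le'; auto. apply Rmin_r.
  - apply ln_le'; auto. apply Rmin_l.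
Qed.

Definition T1 rho L y := Rpower (Rmin y 1) L * / (rho * y + 1).
Definition T3 rho L Bv y := Rpower (Rmin y 1) L * / (rho * y + Bv).

Lemma T1_pos rho L y : 1 < rho -> 0 < y -> 0 < T1 rho L y.
Proof. intros. unfold T1. apply Rmult_lt_0_compat. apply Rp_pos. apply Rinv_0_lt_compat. nra. Qed.
Lemma T3_pos rho L Bv y : 1 < rho -> 0 < y -> 0 < Bv -> 0 < T3 rho L Bv y.
Proof. intros. unfold T3. apply Rmult_lt_0_compat. apply Rp_pos. apply Rinv_0_lt_compat. nra. Qed.

Lemma ln_T1 rho L y : 1 < rho -> 0 < y -> ln (T1 rho L y) = L * ln (Rmin y 1) + ln (/ (rho * y + 1)).
Proof.
  intros. unfold T1. rewrite ln_mult. rewrite ln_Rpower. auto. apply Rp_pos. apply Rinv_0_lt_compat; nra.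
Qed.
Lemma ln_T3 rho L Bv y : 1 < rho -> 0 < y -> 0 < Bv -> ln (T3 rho L Bv y) = L * ln (Rmin y 1) + ln (/ (rho * y + Bv)).
Proof.
  intros. unfold T3. rewrite ln_mult. rewrite ln_Rpower. auto. apply Rp_pos. apply Rinv_0_lt_compat; nra.
Qed.

Lemma piece1 rho L a y : 1 < rho -> 0 < L -> 0 < a -> 0 < y -> rho * y <= 2 * Rpower rho a ->
  T1 rho L y <= exp (Rmax (L - 1) 0 * ln 2) * Rpower rho (- Rx1 L a).
Proof.
  intros Hr HL Ha Hy Hreg. apply from_log. apply T1_pos; auto. rewrite ln_T1 by auto.
  pose proof (ln_D1 rho y Hr Hy) as [W1 W2]. pose proof (ln_m y Hy) as [U1 U2].
  pose proof (ln_pos rho Hr) as Hl. pose proof ln2_pos.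
  assert (Hreg' : ln rho + ln y <= ln 2 + a * ln rho).
  { apply ln_le' in Hreg; [|nra]. rewrite (ln_mult rho y), (ln_mult 2), ln_Rpower in Hreg by (try lra; apply Rp_pos). lra. }
  set (u := ln (Rmin y 1)) in *. set (w := ln (/ (rho * y + 1))) in *. set (Y := ln y) in *. set (l := ln rho) in *.
  unfold Rx1, ap. destruct (Rle_dec L 1).
  - rewrite Rmax_right by lra.
    destruct (Rle_dec (l + Y) 0); nra.
  - rewrite Rmax_left by lra. destruct (Rle_dec a 1).
    + rewrite Rmin_left by lra. destruct (Rle_dec Y 0); nra.
    + rewrite Rmin_right by lra. destruct (Rle_dec Y 0). destruct (Rle_dec (l + Y) 0); nra. nra.
Qed.

Lemma piece_gen rho L y : 1 < rho -> 0 < L -> 0 < y -> T1 rho L y <= Rpower rho (- mL L).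
Proof.
  intros Hr HL Hy.
  replace (Rpower rho (- mL L)) with (exp 0 * Rpower rho (- mL L)) by (rewrite exp_0; ring).
  apply from_log. apply T1_pos; auto. rewrite ln_T1 by auto.
  pose proof (ln_D1 rho y Hr Hy) as [W1 W2]. pose proof (ln_m y Hy) as [U1 U2].
  pose proof (ln_pos rho Hr) as Hl.
  set (u := ln (Rmin y 1)) in *. set (w := ln (/ (rho * y + 1))) in *. set (Y := ln y) in *. set (l := ln rho) in *.
  unfold mL. destruct (Rle_dec L 1).
  - rewrite Rmin_left by lra. destruct (Rle_dec (l + Y) 0); nra.
  - rewrite Rmin_right by lra. destruct (Rle_dec Y 0). destruct (Rle_dec (l + Y) 0); nra. nra.
Qed.

Lemma piece2 rho L a y : 1 < rho -> 0 < L -> 0 <= a -> 0 < y -> (0 < a -> Rpower rho a / 2 <= rho * y) ->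
  T1 rho L y <= exp (Rmax (1 - L) 0 * ln 2) * Rpower rho (- (ap a + (1 - ap a) * mL L)).
Proof.
  intros Hr HL Ha Hy Hreg. apply from_log. apply T1_pos; auto. rewrite ln_T1 by auto.
  pose proof (ln_D1 rho y Hr Hy) as [W1 W2]. pose proof (ln_m y Hy) as [U1 U2].
  pose proof (ln_pos rho Hr) as Hl. pose proof ln2_pos.
  assert (Hreg' : 0 < a -> Rmin a 1 * ln rho - ln 2 <= ln rho + ln y).
  { intros Ha0. specialize (Hreg Ha0).
    assert (Rpower rho (Rmin a 1) / 2 <= rho * y). { eapply Rle_trans. 2: apply Hreg.
      unfold Rdiv. apply Rmult_le_compat_r. lra. apply Rp_mono. lra. apply Rmin_l. }
    apply ln_le' in H0; [|unfold Rdiv; apply Rmult_lt_0_compat; [apply Rp_pos|lra]].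
    unfold Rdiv in H0. rewrite (ln_mult rho y), (ln_mult (Rpower _ _)), ln_Rpower, ln_Rinv in H0 by (try lra; try apply Rp_pos; apply Rinv_0_lt_compat; lra). lra. }
  assert (Hap : 0 <= Rmin a 1 <= 1). { split. apply Rmin_glb; lra. apply Rmin_r. }
  set (u := ln (Rmin y 1)) in *. set (w := ln (/ (rho * y + 1))) in *. set (Y := ln y) in *. set (l := ln rho) in *.
  unfold ap, mL in *. set (a' := Rmin a 1) in *.
  destruct (Rle_dec L 1).
  - rewrite (Rmin_left L) by lra. rewrite Rmax_left by lra.
    destruct (Rle_dec a 0).
    + assert (a' = 0) by (unfold a'; rewrite Rmin_left; lra). rewrite H0.
      assert (0 <= (1 - L) * ln 2) by nra.
      destruct (Rle_dec (l + Y) 0); nra.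
    + specialize (Hreg' ltac:(lra)). destruct (Rle_dec Y 0).
      * assert ((L - 1) * Y <= (L - 1) * (a' * l - ln 2 - l)) by nra. nra.
      * assert (0 <= (1 - a') * (1 - L) * l) by (apply Rmult_le_pos; nra). nra.
  - rewrite (Rmin_right L) by lra. rewrite Rmax_right by lra. rewrite Rmult_0_l.
    destruct (Rle_dec Y 0). destruct (Rle_dec (l + Y) 0); nra. nra.
Qed.

Lemma piece3 rho L a b y : 1 < rho -> 0 < L -> 0 <= a -> 0 < b -> 0 < y ->
  T3 rho L (Rpower rho (a + b)) y <= Rpower rho (- Rx3 L a b).
Proof.
  intros Hr HL Ha Hb Hy.
  replace (Rpower rho (- Rx3 L a b)) with (exp 0 * Rpower rho (- Rx3 L a b)) by (rewrite exp_0; ring).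
  apply from_log. apply T3_pos; auto. apply Rp_pos. rewrite ln_T3 by (auto; apply Rp_pos).
  pose proof (ln_D3 rho y _ Hr Hy (Rp_pos rho (a + b))) as [W1 W2]. rewrite ln_Rpower in W1.
  pose proof (ln_m y Hy) as [U1 U2].
  pose proof (ln_pos rho Hr) as Hl.
  set (u := ln (Rmin y 1)) in *. set (w := ln (/ (rho * y + Rpower rho (a + b)))) in *. set (Y := ln y) in *. set (l := ln rho) in *.
  unfold Rx3, mL. set (s := a + b) in *.
  destruct (Rle_dec 1 s).
  - rewrite (Rmin_right s) by lra. nra.
  - rewrite (Rmin_left s) by lra. destruct (Rle_dec L 1).
    + rewrite Rmin_left by lra. destruct (Rle_dec 0 Y). nra.
      destruct (Rle_dec ((s - 1) * l) Y).
      * assert ((L - 1) * Y <= (L - 1) * ((s - 1) * l)) by nra. nra.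
      * nra.
    + rewrite Rmin_right by lra. destruct (Rle_dec 0 Y). nra.
      destruct (Rle_dec ((s - 1) * l) Y).
      * nra.
      * assert (0 <= (L - 1) * (1 - s) * l) by (apply Rmult_le_pos; nra). nra.
Qed.

Lemma Bb_E rho a b : Bb rho a b = Rpower rho (a + b).
Proof. reflexivity. Qed.

Lemma rgc_eq rho a b : 1 < rho -> 0 < b -> rho * gc rho a b = (Rpower rho (a + b) - Rpower rho b) / (Rpower rho b - 1).
Proof.
  intros Hr Hb. pose proof (Aa_gt1 rho b Hr Hb). unfold gc. rewrite Aa_E in *. rewrite Bb_E. field. split; apply Rgt_not_eq; lra.
Qed.

Lemma rgc_up rho a b : 1 < rho -> 0 < b -> 2 <= Rpower rho b -> rho * gc rho a b <= 2 * Rpower rho a.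
Proof.
  intros Hr Hb H2. rewrite rgc_eq by auto. rewrite Rp_plus.
  pose proof (Rp_pos rho a). pose proof (Rp_pos rho b).
  apply (Rmult_le_reg_r (Rpower rho b - 1)). lra. unfold Rdiv. rewrite Rmult_assoc, Rinv_l, Rmult_1_r by (apply Rgt_not_eq; lra). nra.
Qed.

Lemma rgc_low rho a b : 1 < rho -> 0 <= a -> 0 < b -> Rpower rho a - 1 <= rho * gc rho a b.
Proof.
  intros Hr Ha Hb. pose proof (Aa_gt1 rho b Hr Hb) as H. rewrite Aa_E in H. rewrite rgc_eq by auto. rewrite Rp_plus.
  pose proof (Rp_pos rho a). pose proof (Rp_pos rho b).
  assert (1 <= Rpower rho a) by (apply Rp_ge1; lra).
  apply (Rmult_le_reg_r (Rpower rho b - 1)). lra. unfold Rdiv. rewrite Rmult_assoc, Rinv_l, Rmult_1_r by (apply Rgt_not_eq; lra). nra.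
Qed.

Lemma gc_zero rho b : 1 < rho -> 0 < b -> gc rho 0 b = 0.
Proof.
  intros Hr Hb. pose proof (Aa_gt1 rho b Hr Hb). unfold gc. rewrite Bb_E. change (Aa rho b) with (Rpower rho b) in *. rewrite Rplus_0_l.
  unfold Rdiv. rewrite Rinv_r by (apply Rgt_not_eq; lra). ring.
Qed.

Lemma Inner_bnd Lc rho a b y : 0 < Lc -> 1 < rho -> 0 <= a -> 0 < b -> 0 < y ->
  0 <= Inner Lc rho a b y <= 3 * Nn Lc.
Proof.
  intros HL Hr Ha Hb Hy. pose proof (Bb_ge1 rho a b Hr Ha Hb).
  pose proof (Pl_nonneg Lc rho b HL Hr). pose proof (Pg_nonneg Lc rho b HL Hr). pose proof (Nn_pos Lc HL).
  pose proof (Pl_le_N Lc rho b HL Hr). pose proof (Pg_le_N Lc rho b HL Hr).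
  assert (0 < rho * y) by nra. unfold Inner. destruct Rle_dec.
  + split. apply Rdiv_le_0_compat; lra. apply Rle_trans with (Nn Lc). 
    unfold Rdiv. rewrite <- (Rmult_1_r (Nn Lc)) at 2. apply Rmult_le_compat_l. lra.
    rewrite <- Rinv_1. apply Rinv_le_contravar; lra. lra.
  + assert (Pl Lc rho b / (rho * y + 1) <= Pl Lc rho b).
    { unfold Rdiv. rewrite <- (Rmult_1_r (Pl Lc rho b)) at 2. apply Rmult_le_compat_l. lra.
      rewrite <- Rinv_1. apply Rinv_le_contravar; lra. }
    assert (Pg Lc rho b / (rho * y + Bb rho a b) <= Pg Lc rho b).
    { unfold Rdiv. rewrite <- (Rmult_1_r (Pg Lc rho b)) at 2. apply Rmult_le_compat_l. lra.
      rewrite <- Rinv_1. apply Rinv_le_contravar; lra. }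
    split. apply Rplus_le_le_0_compat; apply Rdiv_le_0_compat; lra. lra.
Qed.

Lemma Rp_anti rho e1 e2 : 1 < rho -> e1 <= e2 -> Rpower rho (- e2) <= Rpower rho (- e1).
Proof. intros. apply Rp_mono; lra. Qed.

Lemma dd_R1 L M a b : 0 < a -> dd L M a b <= Rx1 L a.
Proof. intros. unfold dd. destruct Rle_dec. lra. apply Rmin_l. Qed.
Lemma dd_R2 L M a b : dd L M a b <= Rx2 L M a b.
Proof. unfold dd. destruct Rle_dec. apply Rmin_l. eapply Rle_trans. apply Rmin_r. apply Rmin_l. Qed.
Lemma dd_R3 L M a b : dd L M a b <= Rx3 L a b.
Proof. unfold dd. destruct Rle_dec. apply Rmin_r. eapply Rle_trans. apply Rmin_r. apply Rmin_r. Qed.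

Lemma Q_bound Ls Lc a b : 0 < Ls -> 0 < Lc -> 0 <= a -> 0 < b ->
  exists CQ r0, 0 < CQ /\ 1 < r0 /\ forall rho, r0 < rho -> forall y, 0 < y ->
    Inner Lc rho a b y * Rpower (Rmin y 1) Ls <= CQ * Rpower rho (- dd Ls Lc a b).
Proof.
  intros HLs HLc Ha Hb.
  destruct (Pl_upper Lc b HLc Hb) as (KP & HKP & HPl).
  destruct (large_rho b 2 Hb) as (r1 & Hr1 & Hb2).
  set (c1 := exp (Rmax (Ls - 1) 0 * ln 2)). set (c2 := exp (Rmax (1 - Ls) 0 * ln 2)).
  assert (Hc1 : 0 < c1) by apply exp_pos. assert (Hc2 : 0 < c2) by apply exp_pos.
  pose proof (Nn_pos Lc HLc) as HN.
  assert (Ha2 : exists r2, 1 < r2 /\ forall rho, r2 < rho -> 0 < a -> 2 <= Rpower rho a).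
  { destruct (Rle_dec a 0). exists 2. split. lra. intros; lra.
    destruct (large_rho a 2 ltac:(lra)) as (r2 & Hr2 & Ha2). exists r2. split; auto. }
  destruct Ha2 as (r2 & Hr2 & Ha2).
  exists (Nn Lc * c1 + KP * c2 + Nn Lc), (Rmax r1 r2). split.
  { assert (0 < Nn Lc * c1) by nra. assert (0 < KP * c2) by nra. lra. }
  split. eapply Rlt_le_trans. apply Hr1. apply Rmax_l.
  intros rho Hrho y Hy.
  assert (Hrho1 : r1 < rho) by (eapply Rle_lt_trans; [apply Rmax_l | apply Hrho]).
  assert (Hrho2 : r2 < rho) by (eapply Rle_lt_trans; [apply Rmax_r | apply Hrho]).
  assert (Hr : 1 < rho) by lra.
  specialize (Hb2 rho Hrho1). specialize (Ha2 rho Hrho2).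
  pose proof (Rp_pos rho (- dd Ls Lc a b)) as HE.
  assert (Hm : 0 < Rpower (Rmin y 1) Ls) by apply Rp_pos.
  pose proof (Pl_nonneg Lc rho b HLc Hr). pose proof (Pg_nonneg Lc rho b HLc Hr). pose proof (Pg_le_N Lc rho b HLc Hr).
  assert (0 < rho * y) by nra.
  unfold Inner. destruct (Rle_dec y (gc rho a b)) as [Hg|Hg].
  - destruct (Rle_dec a 0) as [Ha0|Ha0].
    { assert (a = 0) by lra. subst a. rewrite gc_zero in Hg by auto. lra. }
    assert (Hreg : rho * y <= 2 * Rpower rho a).
    { eapply Rle_trans. apply Rmult_le_compat_l. lra. apply Hg. apply rgc_up; auto. }
    pose proof (piece1 rho Ls a y Hr HLs ltac:(lra) Hy Hreg) as P1. fold c1 in P1.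
    pose proof (Rp_anti rho _ _ Hr (dd_R1 Ls Lc a b ltac:(lra))).
    replace (Nn Lc / (rho * y + 1) * Rpower (Rmin y 1) Ls) with (Nn Lc * T1 rho Ls y) by (unfold T1; field; lra).
    assert (T1 rho Ls y <= c1 * Rpower rho (- dd Ls Lc a b)) by nra.
    assert (Nn Lc * T1 rho Ls y <= Nn Lc * (c1 * Rpower rho (- dd Ls Lc a b))) by (apply Rmult_le_compat_l; lra).
    assert (0 <= KP * c2 * Rpower rho (- dd Ls Lc a b)) by (apply Rmult_le_pos; nra).
    nra.
  - assert (Hreg : 0 < a -> Rpower rho a / 2 <= rho * y).
    { intros Ha0. specialize (Ha2 Ha0). pose proof (rgc_low rho a b Hr Ha Hb).
      assert (rho * gc rho a b < rho * y) by (apply Rmult_lt_compat_l; lra). lra. }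
    pose proof (piece2 rho Ls a y Hr HLs Ha Hy Hreg) as P2. fold c2 in P2.
    pose proof (piece3 rho Ls a b y Hr HLs Ha Hb Hy) as P3.
    specialize (HPl rho Hr).
    replace ((Pl Lc rho b / (rho * y + 1) + Pg Lc rho b / (rho * y + Bb rho a b)) * Rpower (Rmin y 1) Ls)
      with (Pl Lc rho b * T1 rho Ls y + Pg Lc rho b * T3 rho Ls (Rpower rho (a + b)) y).
    2:{ unfold T1, T3. rewrite <- Bb_E. field. pose proof (Bb_ge1 rho a b Hr Ha Hb). split; lra. }
    pose proof (T1_pos rho Ls y Hr Hy). pose proof (T3_pos rho Ls (Rpower rho (a + b)) y Hr Hy (Rp_pos _ _)).
    assert (E2 : Rpower rho (- pM Lc b) * Rpower rho (- (ap a + (1 - ap a) * mL Ls)) <= Rpower rho (- dd Ls Lc a b)).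
    { rewrite <- Rp_plus. apply Rp_mono. lra. pose proof (dd_R2 Ls Lc a b) as HH. unfold Rx2 in HH. lra. }
    pose proof (Rp_anti rho _ _ Hr (dd_R3 Ls Lc a b)) as E3.
    assert (Pl Lc rho b * T1 rho Ls y <= KP * c2 * Rpower rho (- dd Ls Lc a b)).
    { eapply Rle_trans. apply Rmult_le_compat. lra. lra. apply HPl. apply P2.
      replace (KP * Rpower rho (- pM Lc b) * (c2 * Rpower rho (- (ap a + (1 - ap a) * mL Ls))))
        with (KP * c2 * (Rpower rho (- pM Lc b) * Rpower rho (- (ap a + (1 - ap a) * mL Ls)))) by ring.
      apply Rmult_le_compat_l. nra. auto. }
    assert (Pg Lc rho b * T3 rho Ls (Rpower rho (a + b)) y <= Nn Lc * Rpower rho (- dd Ls Lc a b)).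
    { apply Rmult_le_compat; try lra. }
    assert (0 <= Nn Lc * c1 * Rpower rho (- dd Ls Lc a b)) by (apply Rmult_le_pos; nra).
    nra.
Qed.

Lemma ap_range a : 0 <= a -> 0 <= ap a <= 1 /\ ap a <= a.
Proof. intros. unfold ap. split. split. apply Rmin_glb; lra. apply Rmin_r. apply Rmin_l. Qed.
Lemma mL_range L : 0 < L -> 0 < mL L <= 1 /\ mL L <= L.
Proof. intros. unfold mL. split. split. apply Rmin_glb_lt; lra. apply Rmin_r. apply Rmin_l. Qed.

Lemma Rx1_pos L a : 0 < L -> 0 <= a -> 0 < Rx1 L a.
Proof.
  intros HL Ha. unfold Rx1. pose proof (ap_range a Ha) as [[? ?] ?].
  destruct (Rle_dec L 1). rewrite Rmax_right by lra. lra. rewrite Rmax_left by lra. nra.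
Qed.
Lemma Rx2_pos L M a b : 0 < L -> 0 < M -> 0 <= a -> 0 < Rx2 L M a b.
Proof.
  intros HL HM Ha. unfold Rx2, pM. pose proof (ap_range a Ha) as [[? ?] ?]. pose proof (mL_range L HL) as [[? ?] ?].
  assert (0 <= M * Rmax (1 - b) 0) by (apply Rmult_le_pos; [lra | apply Rmax_r]).
  destruct (Req_dec (ap a) 1). rewrite H6. lra. nra.
Qed.
Lemma Rx3_pos L a b : 0 < L -> 0 <= a -> 0 < b -> 0 < Rx3 L a b.
Proof.
  intros HL Ha Hb. unfold Rx3. pose proof (mL_range L HL) as [[? ?] ?].
  assert (Rmin (a + b) 1 <= 1) by apply Rmin_r. nra.
Qed.
Lemma dd_pos L M a b : 0 < L -> 0 < M -> 0 <= a -> 0 < b -> 0 < dd L M a b.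
Proof.
  intros. pose proof (Rx1_pos L a H H1). pose proof (Rx2_pos L M a b H H0 H1). pose proof (Rx3_pos L a b H H1 H2).
  unfold dd. destruct Rle_dec; repeat apply Rmin_glb_lt; auto.
Qed.

Lemma ED_upper Ls Lc a b : 0 < Ls -> 0 < Lc -> 0 <= a -> 0 < b ->
  exists CU r0, 0 < CU /\ 1 < r0 /\ forall rho, r0 < rho ->
    ED' Ls Lc rho a b <= CU * (1 + ln rho) * Rpower rho (- dd Ls Lc a b).
Proof.
  intros HLs HLc Ha Hb.
  destruct (Q_bound Ls Lc a b HLs HLc Ha Hb) as (CQ & r0 & HCQ & Hr0 & HQ).
  destruct (pdf_tail Ls HLs) as (Kt & HKt & HKtb).
  pose proof (dd_pos Ls Lc a b HLs HLc Ha Hb) as Hd.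
  set (d := dd Ls Lc a b) in *.
  set (N := d / Ls + 1).
  assert (HN : 0 < N) by (unfold N; assert (0 < d / Ls) by (apply Rdiv_lt_0_compat; auto); lra).
  pose proof (CL_pos Ls HLs) as HCL. pose proof (Nn_pos Lc HLc) as HNn.
  set (K := 3 * Nn Lc * CL Ls).
  exists (K / Ls + CL Ls * CQ * N + Kt * CQ), r0. split.
  { assert (0 < K / Ls) by (unfold K; apply Rdiv_lt_0_compat; nra).
    assert (0 < CL Ls * CQ * N) by (repeat apply Rmult_lt_0_compat; auto).
    assert (0 < Kt * CQ) by nra. lra. }
  split; auto. intros rho Hrho. assert (Hr : 1 < rho) by lra.
  pose proof (ln_pos rho Hr) as Hl.
  pose proof (Rp_pos rho (- d)) as HE.
  set (x := Rpower rho (- N)).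
  assert (Hx : 0 < x <= 1). { split. apply Rp_pos. apply Rp_le_1; lra. }
  unfold ED'.
  eapply Rle_trans. apply (Int_laplace _ Ls x K (CL Ls * CQ * Rpower rho (- d)) (Kt * CQ * Rpower rho (- d))).
  - apply Good_outer; auto.
  - auto.
  - auto.
  - unfold K; repeat apply Rmult_le_pos; lra.
  - repeat apply Rmult_le_pos; lra.
  - repeat apply Rmult_le_pos; lra.
  - intros y Hy. pose proof (Inner_bnd Lc rho a b y HLc Hr Ha Hb ltac:(lra)).
    pose proof (pdf_le_pow Ls y HLs ltac:(lra)). pose proof (pdf_pos Ls y HLs ltac:(lra)).
    apply Rle_trans with (3 * Nn Lc * (CL Ls * Rpower y (Ls - 1))). apply Rmult_le_compat; lra. unfold K; right; ring.
  - intros y Hy. pose proof (Inner_bnd Lc rho a b y HLc Hr Ha Hb ltac:(lra)).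
    pose proof (pdf_le_pow Ls y HLs ltac:(lra)). pose proof (pdf_pos Ls y HLs ltac:(lra)).
    specialize (HQ rho Hrho y ltac:(lra)). rewrite Rmin_left in HQ by lra.
    rewrite (Rp_minus1 y Ls) in HQ by lra.
    assert (y * (Inner Lc rho a b y * pdf Ls y) <= CL Ls * (Inner Lc rho a b y * (y * Rpower y (Ls - 1)))).
    { replace (CL Ls * (Inner Lc rho a b y * (y * Rpower y (Ls - 1)))) with (y * (Inner Lc rho a b y * (CL Ls * Rpower y (Ls - 1)))) by ring.
      apply Rmult_le_compat_l. lra. apply Rmult_le_compat_l; lra. }
    eapply Rle_trans. apply H2. replace (CL Ls * CQ * Rpower rho (- d)) with (CL Ls * (CQ * Rpower rho (- d))) by ring.
    apply Rmult_le_compat_l. lra. lra.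
  - intros y Hy. pose proof (Inner_bnd Lc rho a b y HLc Hr Ha Hb ltac:(lra)).
    specialize (HKtb y ltac:(lra)). pose proof (pdf_pos Ls y HLs ltac:(lra)).
    specialize (HQ rho Hrho y ltac:(lra)). rewrite Rmin_right, Rp_one, Rmult_1_r in HQ by lra.
    eapply Rle_trans. apply Rmult_le_compat_l. lra. apply HKtb.
    assert (0 < y * y) by nra.
    unfold Rdiv. replace (Kt * CQ * Rpower rho (- d) * / (y * y)) with ((CQ * Rpower rho (- d)) * (Kt * / (y * y))) by ring.
    apply Rmult_le_compat_r. apply Rmult_le_pos. lra. left; apply Rinv_0_lt_compat; lra. auto.
  - assert (Hxl : Rpower x Ls <= Rpower rho (- d)).
    { unfold x. rewrite Rp_pow. apply Rp_mono. lra. unfold N. replace (- (d / Ls + 1) * Ls) with (- d - Ls) by (field; lra). lra. }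
    assert (Hlx : - ln x = N * ln rho). { unfold x. rewrite ln_Rpower. ring. }
    rewrite Hlx.
    assert (K * Rpower x Ls / Ls <= K / Ls * Rpower rho (- d)).
    { replace (K * Rpower x Ls / Ls) with (K / Ls * Rpower x Ls) by (field; lra).
      apply Rmult_le_compat_l. unfold K. apply Rdiv_le_0_compat; [repeat apply Rmult_le_pos; lra | lra]. auto. }
    assert (0 <= K / Ls * Rpower rho (- d) * ln rho).
    { apply Rmult_le_pos. apply Rmult_le_pos. unfold K. apply Rdiv_le_0_compat; [repeat apply Rmult_le_pos; lra | lra]. lra. lra. }
    assert (0 <= Kt * CQ * Rpower rho (- d) * ln rho) by (repeat apply Rmult_le_pos; lra).
    assert (0 <= CL Ls * CQ * N * Rpower rho (- d)) by (repeat apply Rmult_le_pos; lra).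
    set (E0 := Rpower rho (- d)) in *. set (l := ln rho) in *.
    replace ((K / Ls + CL Ls * CQ * N + Kt * CQ) * (1 + l) * E0) with
      (K / Ls * E0 + K / Ls * E0 * l + CL Ls * CQ * N * E0 + CL Ls * CQ * E0 * (N * l) + Kt * CQ * E0 + Kt * CQ * E0 * l) by ring.
    lra.
Qed.

Lemma ED_box Ls Lc rho a b x m : 0 < Ls -> 0 < Lc -> 1 < rho -> 0 <= a -> 0 < b -> 0 < x <= 4 -> 0 <= m ->
  (forall y, x < y < 2 * x -> m <= Inner Lc rho a b y) -> m * cb Ls * Rpower x Ls <= ED' Ls Lc rho a b.
Proof.
  intros. unfold ED'. apply Int_box_pdf; auto. apply Good_outer; auto.
Qed.

Lemma Rp_ge1' rho g : 1 < rho -> 0 <= g -> 1 <= Rpower rho g.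
Proof. intros. apply Rp_ge1; lra. Qed.

Lemma rho_E rho g : 1 < rho -> rho * Rpower rho (g - 1) = Rpower rho g.
Proof. intros. rewrite Rpower_inv_y by lra. field. lra. Qed.


Lemma W1 Ls Lc rho a b g : 0 < Ls -> 0 < Lc -> 1 < rho -> 0 < a -> 0 < b -> 2 <= Rpower rho a ->
  0 <= g <= ap a ->
  Nn Lc / 2 * cb Ls * Rpower (/ 4) Ls * Rpower rho (- (Ls * (1 - g) + g)) <= ED' Ls Lc rho a b.
Proof.
  intros HLs HLc Hr Ha Hb HEa Hg.
  pose proof (ap_range a ltac:(lra)) as [[Hap1 Hap2] Hap3].
  pose proof (Nn_pos Lc HLc) as HN.
  set (x := Rpower rho (g - 1) / 4).
  assert (HE1 : Rpower rho (g - 1) <= 1) by (apply Rp_le_1; lra).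
  assert (Hx : 0 < x <= 4) by (unfold x; pose proof (Rp_pos rho (g - 1)); split; lra).
  pose proof (Rp_ge1' rho g Hr ltac:(lra)) as HEg.
  assert (HEga : Rpower rho g <= Rpower rho a) by (apply Rp_mono; lra).
  eapply Rle_trans. 2: apply (ED_box Ls Lc rho a b x (Nn Lc / 2 * Rpower rho (- g))); auto; try lra.
  - unfold x. unfold Rdiv. rewrite Rp_mul by (try apply Rp_pos; lra). rewrite Rp_pow.
    replace (- (Ls * (1 - g) + g)) with (- g + (g - 1) * Ls) by ring. rewrite Rp_plus.
    right; ring.
  - pose proof (Rp_pos rho (- g)); nra.
  - intros y Hy. pose proof (rgc_low rho a b Hr ltac:(lra) Hb).
    assert (Hry : rho * y < Rpower rho g / 2).
    { rewrite <- (rho_E rho g Hr). unfold x in Hy. nra. }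
    assert (0 < rho * y) by nra.
    unfold Inner. destruct Rle_dec as [Hgc|Hgc].
    + rewrite Rpower_Ropp. unfold Rdiv.
      apply Rle_trans with (Nn Lc * / (2 * Rpower rho g)).
      * right. field. pose proof (Rp_pos rho g); lra.
      * apply Rmult_le_compat_l. lra. apply Rinv_le_contravar. lra. lra.
    + exfalso. apply Hgc. apply (Rmult_le_reg_l rho). lra. lra.
Qed.

Lemma W2 Ls Lc rho a b g kP : 0 < Ls -> 0 < Lc -> 1 < rho -> 0 <= a -> 0 < b -> 2 <= Rpower rho b ->
  a <= g <= 1 -> 0 <= kP -> kP * Rpower rho (- pM Lc b) <= Pl Lc rho b ->
  kP / 9 * cb Ls * Rpower 4 Ls * Rpower rho (- (pM Lc b + g + Ls * (1 - g))) <= ED' Ls Lc rho a b.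
Proof.
  intros HLs HLc Hr Ha Hb HA Hg HkP HPl.
  pose proof (Pg_nonneg Lc rho b HLc Hr). pose proof (Bb_ge1 rho a b Hr Ha Hb).
  set (x := 4 * Rpower rho (g - 1)).
  assert (HE1 : Rpower rho (g - 1) <= 1) by (apply Rp_le_1; lra).
  assert (Hx : 0 < x <= 4) by (unfold x; pose proof (Rp_pos rho (g - 1)); split; lra).
  pose proof (Rp_ge1' rho g Hr ltac:(lra)) as HEg.
  assert (HEga : Rpower rho a <= Rpower rho g) by (apply Rp_mono; lra).
  pose proof (Rp_pos rho (- pM Lc b)) as HP. pose proof (Rp_pos rho (- g)) as HPg.
  eapply Rle_trans. 2: apply (ED_box Ls Lc rho a b x (kP / 9 * Rpower rho (- pM Lc b) * Rpower rho (- g))); auto; try lra.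
  - unfold x. rewrite Rp_mul by (try apply Rp_pos; lra). rewrite Rp_pow.
    replace (- (pM Lc b + g + Ls * (1 - g))) with (- pM Lc b + - g + (g - 1) * Ls) by ring. rewrite !Rp_plus.
    right; field.
  - apply Rmult_le_pos. apply Rmult_le_pos. lra. lra. lra.
  - intros y Hy. pose proof (rgc_up rho a b Hr Hb HA).
    assert (Hry1 : 4 * Rpower rho g < rho * y).
    { rewrite <- (rho_E rho g Hr). unfold x in Hy. nra. }
    assert (Hry2 : rho * y < 8 * Rpower rho g).
    { rewrite <- (rho_E rho g Hr). unfold x in Hy. nra. }
    unfold Inner. destruct Rle_dec as [Hgc|Hgc].
    + exfalso. assert (rho * y <= rho * gc rho a b) by (apply Rmult_le_compat_l; lra). lra.
    + assert (0 <= Pg Lc rho b / (rho * y + Bb rho a b)) by (apply Rdiv_le_0_compat; lra).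
      assert (kP / 9 * Rpower rho (- pM Lc b) * Rpower rho (- g) <= Pl Lc rho b / (rho * y + 1)).
      { rewrite Rpower_Ropp with (y := g). unfold Rdiv.
        apply Rle_trans with (Pl Lc rho b * / (9 * Rpower rho g)).
        - replace (kP * / 9 * Rpower rho (- pM Lc b) * / Rpower rho g) with ((kP * Rpower rho (- pM Lc b)) * / (9 * Rpower rho g)) by (field; lra).
          apply Rmult_le_compat_r. left; apply Rinv_0_lt_compat; lra. auto.
        - apply Rmult_le_compat_l. pose proof (Pl_nonneg Lc rho b HLc Hr); lra. apply Rinv_le_contravar; lra. }
      lra.
Qed.

Lemma W3 Ls Lc rho a b g : 0 < Ls -> 0 < Lc -> 1 < rho -> 0 <= a -> 0 < b -> b <= 1 -> 2 <= Rpower rho b ->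
  a <= g <= 1 ->
  cb Lc / 9 * cb Ls * Rpower 4 Ls * Rpower rho (- (Rmax g (a + b) + Ls * (1 - g))) <= ED' Ls Lc rho a b.
Proof.
  intros HLs HLc Hr Ha Hb Hb1 HA Hg.
  pose proof (Pg_lower Lc b HLc Hb Hb1 rho Hr) as HPg. pose proof (cb_pos Lc HLc).
  pose proof (Pl_nonneg Lc rho b HLc Hr).
  set (x := 4 * Rpower rho (g - 1)).
  assert (HE1 : Rpower rho (g - 1) <= 1) by (apply Rp_le_1; lra).
  assert (Hx : 0 < x <= 4) by (unfold x; pose proof (Rp_pos rho (g - 1)); split; lra).
  pose proof (Rp_ge1' rho g Hr ltac:(lra)) as HEg.
  assert (HEga : Rpower rho a <= Rpower rho g) by (apply Rp_mono; lra).
  set (mx := Rmax g (a + b)).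
  assert (HEm1 : Rpower rho g <= Rpower rho mx) by (apply Rp_mono; [lra | apply Rmax_l]).
  assert (HEm2 : Rpower rho (a + b) <= Rpower rho mx) by (apply Rp_mono; [lra | apply Rmax_r]).
  pose proof (Rp_pos rho (- mx)) as HPm.
  eapply Rle_trans. 2: apply (ED_box Ls Lc rho a b x (cb Lc / 9 * Rpower rho (- mx))); auto; try lra.
  - unfold x. rewrite Rp_mul by (try apply Rp_pos; lra). rewrite Rp_pow.
    replace (- (mx + Ls * (1 - g))) with (- mx + (g - 1) * Ls) by ring. rewrite !Rp_plus.
    right; field.
  - apply Rmult_le_pos. lra. lra.
  - intros y Hy. pose proof (rgc_up rho a b Hr Hb HA).
    assert (Hry1 : 4 * Rpower rho g < rho * y).
    { rewrite <- (rho_E rho g Hr). unfold x in Hy. nra. }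
    assert (Hry2 : rho * y < 8 * Rpower rho g).
    { rewrite <- (rho_E rho g Hr). unfold x in Hy. nra. }
    unfold Inner. destruct Rle_dec as [Hgc|Hgc].
    + exfalso. assert (rho * y <= rho * gc rho a b) by (apply Rmult_le_compat_l; lra). lra.
    + assert (0 <= Pl Lc rho b / (rho * y + 1)) by (apply Rdiv_le_0_compat; lra).
      assert (cb Lc / 9 * Rpower rho (- mx) <= Pg Lc rho b / (rho * y + Bb rho a b)).
      { rewrite Rpower_Ropp. rewrite Bb_E. unfold Rdiv.
        apply Rle_trans with (cb Lc * / (9 * Rpower rho mx)).
        - right. field. pose proof (Rp_pos rho mx). lra.
        - apply Rmult_le_compat. lra. left; apply Rinv_0_lt_compat; pose proof (Rp_pos rho mx); lra. auto.
          apply Rinv_le_contravar. pose proof (Rp_pos rho (a + b)); nra. lra. }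
      lra.
Qed.

Definition c1 Ls Lc := Nn Lc / 2 * cb Ls * Rpower (/ 4) Ls.
Definition c2 Ls kP := kP / 9 * cb Ls * Rpower 4 Ls.
Definition c3 Ls Lc := cb Lc / 9 * cb Ls * Rpower 4 Ls.

Lemma LB1 Ls Lc rho a b : 0 < Ls -> 0 < Lc -> 1 < rho -> 0 < a -> 0 < b -> 2 <= Rpower rho a ->
  c1 Ls Lc * Rpower rho (- Rx1 Ls a) <= ED' Ls Lc rho a b.
Proof.
  intros. pose proof (ap_range a ltac:(lra)) as [[? ?] ?]. unfold c1, Rx1.
  destruct (Rle_dec Ls 1).
  - rewrite Rmax_right by lra. replace (Ls - ap a * 0) with (Ls * (1 - 0) + 0) by ring.
    apply W1; auto. lra.
  - rewrite Rmax_left by lra. replace (Ls - ap a * (Ls - 1)) with (Ls * (1 - ap a) + ap a) by ring.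
    apply W1; auto. lra.
Qed.

Lemma LB2 Ls Lc rho a b kP : 0 < Ls -> 0 < Lc -> 1 < rho -> 0 <= a -> a <= 1 -> 0 < b -> 2 <= Rpower rho b ->
  0 <= kP -> kP * Rpower rho (- pM Lc b) <= Pl Lc rho b ->
  c2 Ls kP * Rpower rho (- Rx2 Ls Lc a b) <= ED' Ls Lc rho a b.
Proof.
  intros. unfold c2, Rx2, mL. assert (ap a = a) by (unfold ap; rewrite Rmin_left; lra). rewrite H8.
  destruct (Rle_dec Ls 1).
  - rewrite Rmin_left by lra. replace (pM Lc b + a + (1 - a) * Ls) with (pM Lc b + a + Ls * (1 - a)) by ring.
    apply W2; auto. lra.
  - rewrite Rmin_right by lra. replace (pM Lc b + a + (1 - a) * 1) with (pM Lc b + 1 + Ls * (1 - 1)) by ring.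
    apply W2; auto. lra.
Qed.

Lemma LB3 Ls Lc rho a b : 0 < Ls -> 0 < Lc -> 1 < rho -> 0 <= a -> a <= 1 -> 0 < b -> b <= 1 -> 2 <= Rpower rho b ->
  c3 Ls Lc * Rpower rho (- Rx3 Ls a b) <= ED' Ls Lc rho a b.
Proof.
  intros. unfold c3, Rx3, mL.
  destruct (Rle_dec 1 (a + b)).
  - rewrite (Rmin_right (a + b)) by lra. replace (a + b + (1 - 1) * Rmin Ls 1) with (Rmax 1 (a + b) + Ls * (1 - 1)).
    apply W3; auto; lra. rewrite Rmax_right by lra. ring.
  - rewrite (Rmin_left (a + b)) by lra. destruct (Rle_dec Ls 1).
    + rewrite Rmin_left by lra. replace (a + b + (1 - (a + b)) * Ls) with (Rmax (a + b) (a + b) + Ls * (1 - (a + b))).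
      apply W3; auto; lra. rewrite Rmax_left by lra. ring.
    + rewrite Rmin_right by lra. replace (a + b + (1 - (a + b)) * 1) with (Rmax 1 (a + b) + Ls * (1 - 1)).
      apply W3; auto; lra. rewrite Rmax_left by lra. ring.
Qed.

Lemma Rx2_le1 Ls Lc a b : 0 < Ls -> 0 <= a -> 1 < b -> Rx2 Ls Lc a b <= 1.
Proof.
  intros. unfold Rx2, pM. rewrite Rmax_right by lra. rewrite Rmult_0_r.
  pose proof (ap_range a H0) as [[? ?] ?]. pose proof (mL_range Ls H) as [[? ?] ?]. nra.
Qed.

Lemma ED_lower Ls Lc a b : 0 < Ls -> 0 < Lc -> 0 <= a -> 0 < b ->
  exists cL r0, 0 < cL /\ 1 < r0 /\ forall rho, r0 < rho -> cL * Rpower rho (- dd Ls Lc a b) <= ED' Ls Lc rho a b.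
Proof.
  intros HLs HLc Ha Hb.
  destruct (Pl_lower Lc b HLc Hb) as (kP & rP & HkP & HrP & HPl).
  destruct (large_rho b 2 Hb) as (rb & Hrb & HA).
  assert (Hra : exists ra, 1 < ra /\ forall rho, ra < rho -> 0 < a -> 2 <= Rpower rho a).
  { destruct (Rle_dec a 0). exists 2. split. lra. intros; lra.
    destruct (large_rho a 2 ltac:(lra)) as (r2 & Hr2 & Ha2). exists r2. split; auto. }
  destruct Hra as (ra & Hra & HEa).
  pose proof (Nn_pos Lc HLc). pose proof (cb_pos Ls HLs). pose proof (cb_pos Lc HLc).
  assert (P1 : 0 < c1 Ls Lc). { unfold c1. apply Rmult_lt_0_compat. apply Rmult_lt_0_compat. apply Rdiv_lt_0_compat; lra. auto. apply Rp_pos. }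
  assert (P2 : 0 < c2 Ls kP). { unfold c2. apply Rmult_lt_0_compat. apply Rmult_lt_0_compat. apply Rdiv_lt_0_compat; lra. auto. apply Rp_pos. }
  assert (P3 : 0 < c3 Ls Lc). { unfold c3. apply Rmult_lt_0_compat. apply Rmult_lt_0_compat. apply Rdiv_lt_0_compat; lra. auto. apply Rp_pos. }
  set (cL := Rmin (c1 Ls Lc) (Rmin (c2 Ls kP) (c3 Ls Lc))).
  assert (HcL1 : cL <= c1 Ls Lc) by apply Rmin_l.
  assert (HcL2 : cL <= c2 Ls kP) by (eapply Rle_trans; [apply Rmin_r | apply Rmin_l]).
  assert (HcL3 : cL <= c3 Ls Lc) by (eapply Rle_trans; [apply Rmin_r | apply Rmin_r]).
  exists cL, (Rmax rP (Rmax rb ra)). split. unfold cL. repeat apply Rmin_glb_lt; auto.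
  split. eapply Rlt_le_trans. apply HrP. apply Rmax_l.
  intros rho Hrho.
  assert (Q1 : rP < rho) by (eapply Rle_lt_trans; [apply Rmax_l | apply Hrho]).
  assert (Q2 : rb < rho) by (eapply Rle_lt_trans; [eapply Rle_trans; [apply Rmax_l | apply Rmax_r] | apply Hrho]).
  assert (Q3 : ra < rho) by (eapply Rle_lt_trans; [eapply Rle_trans; [apply Rmax_r | apply Rmax_r] | apply Hrho]).
  assert (Hr : 1 < rho) by lra.
  specialize (HPl rho Q1). specialize (HA rho Q2). specialize (HEa rho Q3).
  assert (L1 : 0 < a -> cL * Rpower rho (- Rx1 Ls a) <= ED' Ls Lc rho a b).
  { intros Ha0. eapply Rle_trans. 2: apply LB1; auto. apply Rmult_le_compat_r. left; apply Rp_pos. auto. }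
  assert (L2 : a <= 1 -> cL * Rpower rho (- Rx2 Ls Lc a b) <= ED' Ls Lc rho a b).
  { intros Ha1. eapply Rle_trans. 2: apply (LB2 Ls Lc rho a b kP); auto; lra. apply Rmult_le_compat_r. left; apply Rp_pos. auto. }
  assert (L3 : a <= 1 -> b <= 1 -> cL * Rpower rho (- Rx3 Ls a b) <= ED' Ls Lc rho a b).
  { intros Ha1 Hb1. eapply Rle_trans. 2: apply LB3; auto. apply Rmult_le_compat_r. left; apply Rp_pos. auto. }
  assert (Hc0 : 0 < cL) by (unfold cL; repeat apply Rmin_glb_lt; auto).
  assert (key : exists e, e <= dd Ls Lc a b /\ cL * Rpower rho (- e) <= ED' Ls Lc rho a b).
  { pose proof (ap_range a Ha) as [[? ?] ?]. pose proof (mL_range Ls HLs) as [[? ?] ?].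
    destruct (Rle_dec a 1) as [Ha1|Ha1].
    - destruct (Rle_dec b 1) as [Hb1|Hb1].
      + unfold dd. destruct (Rle_dec a 0).
        * destruct (Rle_dec (Rx2 Ls Lc a b) (Rx3 Ls a b)).
          -- exists (Rx2 Ls Lc a b). rewrite Rmin_left by lra. split. lra. auto.
          -- exists (Rx3 Ls a b). rewrite Rmin_right by lra. split. lra. auto.
        * destruct (Rle_dec (Rx2 Ls Lc a b) (Rx3 Ls a b)).
          -- rewrite (Rmin_left (Rx2 _ _ _ _)) by lra. destruct (Rle_dec (Rx1 Ls a) (Rx2 Ls Lc a b)).
             ++ exists (Rx1 Ls a). rewrite Rmin_left by lra. split. lra. apply L1; lra.
             ++ exists (Rx2 Ls Lc a b). rewrite Rmin_right by lra. split. lra. auto.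
          -- rewrite (Rmin_right (Rx2 _ _ _ _)) by lra. destruct (Rle_dec (Rx1 Ls a) (Rx3 Ls a b)).
             ++ exists (Rx1 Ls a). rewrite Rmin_left by lra. split. lra. apply L1; lra.
             ++ exists (Rx3 Ls a b). rewrite Rmin_right by lra. split. lra. auto.
      + assert (Rx2 Ls Lc a b <= Rx3 Ls a b).
        { pose proof (Rx2_le1 Ls Lc a b HLs Ha ltac:(lra)). unfold Rx3. rewrite Rmin_right by lra. lra. }
        unfold dd. rewrite (Rmin_left (Rx2 _ _ _ _)) by lra. destruct (Rle_dec a 0).
        * exists (Rx2 Ls Lc a b). split. lra. auto.
        * destruct (Rle_dec (Rx1 Ls a) (Rx2 Ls Lc a b)).
          -- exists (Rx1 Ls a). rewrite Rmin_left by lra. split. lra. apply L1; lra.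
          -- exists (Rx2 Ls Lc a b). rewrite Rmin_right by lra. split. lra. auto.
    - exists (Rx1 Ls a). split. 2: apply L1; lra.
      assert (Hap1 : ap a = 1) by (unfold ap; rewrite Rmin_right; lra).
      assert (E1 : Rx1 Ls a = mL Ls).
      { unfold Rx1, mL. rewrite Hap1. destruct (Rle_dec Ls 1). rewrite Rmax_right, Rmin_left by lra. ring.
        rewrite Rmax_left, Rmin_right by lra. ring. }
      assert (Rx1 Ls a <= Rx2 Ls Lc a b).
      { unfold Rx2, pM. rewrite Hap1, E1. assert (0 <= Lc * Rmax (1 - b) 0) by (apply Rmult_le_pos; [lra | apply Rmax_r]). lra. }
      assert (Rx1 Ls a <= Rx3 Ls a b).
      { unfold Rx3. rewrite E1. assert (Rmin (a + b) 1 <= 1) by apply Rmin_r. nra. }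
      unfold dd. destruct (Rle_dec a 0). lra. apply Rmin_glb. lra. apply Rmin_glb; lra. }
  destruct key as (e & He & HeB).
  eapply Rle_trans. 2: apply HeB. apply Rmult_le_compat_l. lra. apply Rp_mono; lra.
Qed.

Lemma min_comb2 x y l : 0 <= l <= 1 -> Rmin x y <= l * x + (1 - l) * y.
Proof. intros. destruct (Rle_dec x y). rewrite Rmin_left by lra. nra. rewrite Rmin_right by lra. nra. Qed.

Lemma dd_le_Delta Ls Lc a b : 0 < Ls -> 0 < Lc -> 0 <= a -> 0 < b -> dd Ls Lc a b <= Delta_formula Ls Lc.
Proof.
  intros HL HM Ha Hb. unfold Delta_formula.
  pose proof (ap_range a Ha) as [[Hap0 Hap1] Hapa].
  destruct (Rle_dec Ls 1) as [HL1|HL1].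
  - assert (Hden : 0 < Lc + 1 - Ls) by lra.
    assert (HmL : mL Ls = Ls) by (unfold mL; rewrite Rmin_left; lra).
    destruct (Rle_dec a 0) as [Ha0|Ha0].
    + assert (a = 0) by lra. subst a.
      assert (Hap : ap 0 = 0) by (unfold ap; rewrite Rmin_left; lra).
      unfold dd. destruct (Rle_dec 0 0); [|lra]. unfold Rx2, Rx3, pM. rewrite Hap, HmL, Rplus_0_l.
      destruct (Rle_dec 1 b).
      * rewrite Rmax_right by lra. eapply Rle_trans. apply Rmin_l.
        assert (0 <= (1 - Ls) * Lc / (Lc + 1 - Ls)) by (apply Rdiv_le_0_compat; nra).
        replace (1 - (1 - Ls) ^ 2 / (Lc + 1 - Ls)) with (Ls + (1 - Ls) * Lc / (Lc + 1 - Ls)) by (field; lra). lra.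
      * rewrite Rmax_left by lra. rewrite (Rmin_left b 1) by lra.
        eapply Rle_trans. apply (min_comb2 _ _ ((1 - Ls) / (Lc + 1 - Ls))).
        split. apply Rdiv_le_0_compat; lra. apply (Rmult_le_reg_r (Lc + 1 - Ls)). lra. unfold Rdiv.
        rewrite Rmult_assoc, Rinv_l, Rmult_1_r by lra. lra.
        right. field. lra.
    + unfold dd. destruct (Rle_dec a 0); [lra|]. eapply Rle_trans. apply Rmin_l. unfold Rx1.
      rewrite Rmax_right by lra.
      assert (0 <= (1 - Ls) * Lc / (Lc + 1 - Ls)) by (apply Rdiv_le_0_compat; nra).
      replace (1 - (1 - Ls) ^ 2 / (Lc + 1 - Ls)) with (Ls + (1 - Ls) * Lc / (Lc + 1 - Ls)) by (field; lra). lra.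
  - assert (HD : 0 < Ls * (Lc + 1) - 1) by nra.
    assert (HmL : mL Ls = 1) by (unfold mL; rewrite Rmin_right; lra).
    assert (HDel1 : 1 <= (Ls * (2 * Lc + 1) - Lc - 1) / (Ls * (Lc + 1) - 1)).
    { apply (Rmult_le_reg_r (Ls * (Lc + 1) - 1)). lra. unfold Rdiv. rewrite Rmult_assoc, Rinv_l, Rmult_1_r by lra. nra. }
    assert (HR2 : 1 <= b -> Rx2 Ls Lc a b = 1).
    { intros. unfold Rx2, pM. rewrite HmL, Rmax_right by lra. ring. }
    assert (HR3 : a + b <= 1 -> Rx3 Ls a b = 1).
    { intros. unfold Rx3. rewrite HmL, Rmin_left by lra. ring. }
    assert (Hdd2 := dd_R2 Ls Lc a b). assert (Hdd3 := dd_R3 Ls Lc a b).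
    destruct (Rle_dec 1 b) as [Hb1|Hb1]. { rewrite HR2 in Hdd2 by auto. lra. }
    destruct (Rle_dec (a + b) 1) as [Hs1|Hs1]. { rewrite HR3 in Hdd3 by auto. lra. }
    destruct (Rle_dec a 0) as [Ha0|Ha0].
    { unfold Rx3 in Hdd3. rewrite HmL, Rmin_right in Hdd3 by lra. unfold Rx2, pM in Hdd2. rewrite HmL, Rmax_left in Hdd2 by lra.
      assert (a = 0) by lra. subst a. unfold ap in Hdd2. rewrite Rmin_left in Hdd2 by lra. lra. }
    assert (Hdd1 := dd_R1 Ls Lc a b ltac:(lra)).
    destruct (Rle_dec 1 a) as [Ha1|Ha1].
    { unfold Rx1, ap in Hdd1. rewrite Rmin_right, Rmax_left in Hdd1 by lra. lra. }
    assert (Hap : ap a = a) by (unfold ap; rewrite Rmin_left; lra).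
    unfold Rx1 in Hdd1. rewrite Hap, Rmax_left in Hdd1 by lra.
    unfold Rx2, pM in Hdd2. rewrite Hap, HmL, Rmax_left in Hdd2 by lra.
    unfold Rx3 in Hdd3. rewrite HmL, Rmin_right in Hdd3 by lra.
    set (D := Ls * (Lc + 1) - 1) in *. set (d := dd Ls Lc a b) in *.
    set (t := Lc * (Ls - 1) / D).
    assert (Ht : 0 < t) by (unfold t; apply Rdiv_lt_0_compat; nra).
    assert (E : t / (Ls - 1) * (Ls - a * (Ls - 1)) + t / Lc * (Lc * (1 - b) + a + (1 - a) * 1) + t * (a + b + (1 - 1) * 1)
               = (Ls * (2 * Lc + 1) - Lc - 1) / D).
    { unfold t, D. field. repeat split; intro; nra. }
    assert (Es : t / (Ls - 1) + t / Lc + t = 1). { unfold t, D. field. repeat split; intro; nra. }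
    assert (0 < t / (Ls - 1)) by (apply Rdiv_lt_0_compat; lra).
    assert (0 < t / Lc) by (apply Rdiv_lt_0_compat; lra).
    rewrite <- E. nra.
Qed.

Lemma dd_attain Ls Lc : 0 < Ls -> 0 < Lc -> exists a b, 0 <= a /\ 0 < b /\ dd Ls Lc a b = Delta_formula Ls Lc.
Proof.
  intros HL HM. unfold Delta_formula. destruct (Rle_dec Ls 1) as [HL1|HL1].
  - assert (Hden : 0 < Lc + 1 - Ls) by lra.
    exists 0, (Lc / (Lc + 1 - Ls)). split. lra. split. apply Rdiv_lt_0_compat; lra.
    assert (Hb1 : Lc / (Lc + 1 - Ls) <= 1).
    { apply (Rmult_le_reg_r (Lc + 1 - Ls)). lra. unfold Rdiv. rewrite Rmult_assoc, Rinv_l, Rmult_1_r by lra. lra. }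
    assert (HmL : mL Ls = Ls) by (unfold mL; rewrite Rmin_left; lra).
    assert (Hap : ap 0 = 0) by (unfold ap; rewrite Rmin_left; lra).
    unfold dd. destruct (Rle_dec 0 0); [|lra]. unfold Rx2, Rx3, pM. rewrite Hap, HmL, Rplus_0_l.
    rewrite Rmax_left by lra. rewrite (Rmin_left (Lc / _)) by lra.
    replace (Lc * (1 - Lc / (Lc + 1 - Ls)) + 0 + (1 - 0) * Ls) with (1 - (1 - Ls) ^ 2 / (Lc + 1 - Ls)) by (field; lra).
    replace (Lc / (Lc + 1 - Ls) + (1 - Lc / (Lc + 1 - Ls)) * Ls) with (1 - (1 - Ls) ^ 2 / (Lc + 1 - Ls)) by (field; lra).
    apply Rmin_left. lra.
  - assert (HD : 0 < Ls * (Lc + 1) - 1) by nra.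
    set (D := Ls * (Lc + 1) - 1) in *.
    set (a := 1 - Lc / D). set (b := Ls * Lc / D).
    assert (Ha0 : 0 < a). { unfold a. assert (Lc / D < 1). { apply (Rmult_lt_reg_r D). lra. unfold Rdiv. rewrite Rmult_assoc, Rinv_l, Rmult_1_r by lra. unfold D. nra. } lra. }
    assert (Ha1 : a < 1). { unfold a. assert (0 < Lc / D) by (apply Rdiv_lt_0_compat; lra). lra. }
    assert (Hb0 : 0 < b) by (unfold b; apply Rdiv_lt_0_compat; nra).
    assert (Hb1 : b < 1). { unfold b. apply (Rmult_lt_reg_r D). lra. unfold Rdiv. rewrite Rmult_assoc, Rinv_l, Rmult_1_r by lra. unfold D. nra. }
    assert (Hs : 1 <= a + b). { unfold a, b. assert (0 <= (Ls - 1) * Lc / D) by (apply Rdiv_le_0_compat; nra).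
      replace (1 - Lc / D + Ls * Lc / D) with (1 + (Ls - 1) * Lc / D) by (field; lra). lra. }
    exists a, b. split. lra. split. lra.
    assert (HmL : mL Ls = 1) by (unfold mL; rewrite Rmin_right; lra).
    assert (Hap : ap a = a) by (unfold ap; rewrite Rmin_left; lra).
    set (V := (Ls * (2 * Lc + 1) - Lc - 1) / D).
    assert (E1 : Rx1 Ls a = V). { unfold Rx1, V. rewrite Hap, Rmax_left by lra. unfold a, D in *. field. intro; nra. }
    assert (E2 : Rx2 Ls Lc a b = V). { unfold Rx2, pM, V. rewrite Hap, HmL, Rmax_left by lra. unfold a, b, D in *. field. intro; nra. }
    assert (E3 : Rx3 Ls a b = V). { unfold Rx3, V. rewrite HmL, Rmin_right by lra. unfold a, b, D in *. field. intro; nra. }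
    unfold dd. destruct (Rle_dec a 0); [lra|]. rewrite E1, E2, E3. rewrite (Rmin_left V V) by lra. rewrite (Rmin_left V V) by lra. reflexivity.
Qed.

Lemma lim_unique f d1 d2 : lim_infty f d1 -> lim_infty f d2 -> d1 = d2.
Proof.
  intros H1 H2. destruct (Req_dec d1 d2) as [|Hne]; auto. exfalso.
  set (eps := Rabs (d1 - d2) / 2).
  assert (He : 0 < eps) by (unfold eps; assert (0 < Rabs (d1 - d2)) by (apply Rabs_pos_lt; lra); lra).
  destruct (H1 eps He) as (M1 & HM1). destruct (H2 eps He) as (M2 & HM2).
  set (x := Rmax M1 M2 + 1).
  assert (M1 < x) by (unfold x; pose proof (Rmax_l M1 M2); lra).
  assert (M2 < x) by (unfold x; pose proof (Rmax_r M1 M2); lra).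
  specialize (HM1 x H). specialize (HM2 x H0).
  assert (Rabs (d1 - d2) < 2 * eps).
  { replace (d1 - d2) with (- (f x - d1) + (f x - d2)) by ring. eapply Rle_lt_trans. apply Rabs_triang. rewrite Rabs_Ropp. lra. }
  unfold eps in H3. lra.
Qed.

Lemma lim_bounds (f : R -> R) d cL CU r0 : 0 < cL -> 0 < CU -> 1 < r0 ->
  (forall rho, r0 < rho -> cL * Rpower rho (- d) <= f rho /\ f rho <= CU * (1 + ln rho) * Rpower rho (- d)) ->
  lim_infty (fun rho => - ln (f rho) / ln rho) d.
Proof.
  intros HcL HCU Hr0 Hb eps Heps.
  set (m := 4 / eps). assert (Hm : 0 < m) by (unfold m; apply Rdiv_lt_0_compat; lra).
  set (K := Rabs (ln cL) + Rabs (ln CU) + Rabs (ln m) + 1).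
  assert (HK : 1 <= K) by (unfold K; pose proof (Rabs_pos (ln cL)); pose proof (Rabs_pos (ln CU)); pose proof (Rabs_pos (ln m)); lra).
  exists (Rmax r0 (exp (2 * K / eps + 1))). intros rho Hrho.
  assert (Hr : r0 < rho) by (eapply Rle_lt_trans; [apply Rmax_l | apply Hrho]).
  assert (Hr2 : exp (2 * K / eps + 1) < rho) by (eapply Rle_lt_trans; [apply Rmax_r | apply Hrho]).
  assert (Hrho1 : 1 < rho) by lra.
  assert (Hl : 2 * K / eps + 1 < ln rho).
  { rewrite <- (ln_exp (2 * K / eps + 1)). apply ln_increasing. apply exp_pos. auto. }
  assert (H2K : 0 < 2 * K / eps) by (apply Rdiv_lt_0_compat; lra).
  set (l := ln rho) in *.
  assert (Hl1 : 1 < l) by lra.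
  assert (HKl : K < eps * l / 2).
  { apply (Rmult_lt_reg_r (2 / eps)). apply Rdiv_lt_0_compat; lra.
    replace (eps * l / 2 * (2 / eps)) with l by (field; lra). replace (K * (2 / eps)) with (2 * K / eps) by (field; lra). lra. }
  destruct (Hb rho Hr) as [B1 B2]. fold l in B1, B2.
  pose proof (Rp_pos rho (- d)) as HE.
  assert (Hf : 0 < f rho) by nra.
  assert (L1 : ln cL - d * l <= ln (f rho)).
  { apply ln_le' in B1; [|nra]. rewrite ln_mult, ln_Rpower in B1 by (auto; apply Rp_pos). fold l in B1. lra. }
  assert (L2 : ln (f rho) <= ln CU + ln (1 + l) - d * l).
  { apply ln_le' in B2; auto. rewrite ln_mult, ln_mult, ln_Rpower in B2 by (try apply Rp_pos; try apply Rmult_lt_0_compat; lra). fold l in B2. lra. }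
  assert (L3 : ln (1 + l) <= eps * l / 2 + Rabs (ln m)).
  { pose proof (ln_le_scaled (1 + l) m ltac:(lra) Hm). pose proof (Rle_abs (ln m)).
    assert ((1 + l) / m <= eps * l / 2). { unfold m. replace ((1 + l) / (4 / eps)) with (eps * (1 + l) / 4) by (field; lra). nra. }
    lra. }
  pose proof (Rle_abs (ln cL)). pose proof (Rle_abs (- ln cL)). rewrite Rabs_Ropp in H0.
  pose proof (Rle_abs (ln CU)). pose proof (Rle_abs (- ln CU)). rewrite Rabs_Ropp in H2.
  assert (X1 : l * (- ln (f rho) / l - d) = - ln (f rho) - d * l) by (field; lra).
  assert (X2 : - eps * l < l * (- ln (f rho) / l - d) < eps * l).
  { rewrite X1. unfold K in HKl. pose proof (Rabs_pos (ln cL)). pose proof (Rabs_pos (ln CU)). pose proof (Rabs_pos (ln m)). split; lra. }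
  apply Rabs_def1.
  - apply (Rmult_lt_reg_l l). lra. lra.
  - apply (Rmult_lt_reg_l l). lra. lra.
Qed.

Lemma main_lim Ls Lc rs rc : 0 < Ls -> 0 < Lc -> 0 <= rs -> 0 < rc ->
  lim_infty (exp_ratio Ls Lc rs rc) (dd Ls Lc rs rc).
Proof.
  intros HLs HLc Hs Hc.
  destruct (ED_lower Ls Lc rs rc HLs HLc Hs Hc) as (cL & r1 & HcL & Hr1 & Hlow).
  destruct (ED_upper Ls Lc rs rc HLs HLc Hs Hc) as (CU & r2 & HCU & Hr2 & Hup).
  unfold exp_ratio.
  apply (lim_bounds (fun rho => EDs Ls Lc rho (rs / 2 * log2 rho) (rc / 2 * log2 rho)) _ cL CU (Rmax r1 r2)); auto.
  - eapply Rlt_le_trans. apply Hr1. apply Rmax_l.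
  - intros rho Hrho.
    assert (Q1 : r1 < rho) by (eapply Rle_lt_trans; [apply Rmax_l | apply Hrho]).
    assert (Q2 : r2 < rho) by (eapply Rle_lt_trans; [apply Rmax_r | apply Hrho]).
    rewrite ED_eq by (auto; lra). split. apply Hlow; auto. apply Hup; auto.
Qed.

Theorem lemma8 (Ls Lc : R) (hLs : 0 < Ls) (hLc : 0 < Lc) :
  (forall rs rc : R, 0 <= rs -> 0 < rc ->
     exists d : R, lim_infty (exp_ratio Ls Lc rs rc) d) /\
  is_lub (fun d => exists rs rc : R, 0 <= rs /\ 0 < rc /\
                     lim_infty (exp_ratio Ls Lc rs rc) d)
         (Delta_formula Ls Lc).
Proof.
  split.
  - intros rs rc Hs Hc. exists (dd Ls Lc rs rc). apply main_lim; auto.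
  - split.
    + intros d (rs & rc & Hs & Hc & Hlim).
      rewrite (lim_unique _ _ _ Hlim (main_lim Ls Lc rs rc hLs hLc Hs Hc)).
      apply dd_le_Delta; auto.
    + intros b Hb. apply Hb.
      destruct (dd_attain Ls Lc hLs hLc) as (a & b' & Ha & Hb' & E).
      exists a, b'. split; auto. split; auto. rewrite <- E. apply main_lim; auto.
Qed.
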